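(* Let $a,b\in\mathbb{R}^2$, $a\neq b$. For every $\varepsilon_0>0$ there exists $\varepsilon_1>0$ such that the following holds. Let $\Omega\subset\mathbb{R}^2$ be a bounded simply connected domain whose boundary consists of the straight segment from $a$ to $b$ together with a rectifiable curve from $b$ to $a$. If $$|\partial\Omega|\le(1+\varepsilon_1)\,2\|a-b\|,$$ then $$|\Omega|\le\frac{1+\varepsilon_0}{\sqrt6}\,\|a-b\|^{3/2}\sqrt{|\partial\Omega|-2\|a-b\|}.$$
   Context: $|\partial\Omega|$ denotes the length of the boundary of $\Omega$, $|\Omega|$ its area, and $\|\cdot\|$ the Euclidean norm. *)

(* Defs.v *)
From Stdlib Require Import Reals Lra.
Open Scope R_scope.

Definition pt := (R * R)%type.

Definition dist2 (p q : pt) : R :=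
  sqrt ((fst p - fst q)^2 + (snd p - snd q)^2).

Definition segment (a b : pt) (x : pt) : Prop :=
  exists t, 0 <= t <= 1 /\
    x = (fst a + t * (fst b - fst a), snd a + t * (snd b - snd a)).

Definition open_set (S : pt -> Prop) : Prop :=
  forall x, S x -> exists r, 0 < r /\ forall y, dist2 x y < r -> S y.

Definition bounded_set (S : pt -> Prop) : Prop :=
  exists M, forall x, S x -> dist2 x (0,0) <= M.

Definition connected_set (S : pt -> Prop) : Prop :=
  ~ exists U V : pt -> Prop, open_set U /\ open_set V /\
      (forall x, S x -> U x \/ V x) /\
      (exists x, S x /\ U x) /\ (exists x, S x /\ V x) /\
      (forall x, S x -> U x -> V x -> False).

Definition in_boundary (S : pt -> Prop) (x : pt) : Prop :=
  forall r, 0 < r -> (exists y, dist2 x y < r /\ S y) /\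
                     (exists y, dist2 x y < r /\ ~ S y).

Definition continuous_path (g : R -> pt) : Prop :=
  forall t, 0 <= t <= 1 -> forall e, 0 < e -> exists d, 0 < d /\
    forall s, 0 <= s <= 1 -> Rabs (s - t) < d -> dist2 (g s) (g t) < e.

Definition continuous_square (H : R -> R -> pt) : Prop :=
  forall t s, 0 <= t <= 1 -> 0 <= s <= 1 -> forall e, 0 < e ->
    exists d, 0 < d /\ forall t' s', 0 <= t' <= 1 -> 0 <= s' <= 1 ->
      Rabs (t' - t) < d -> Rabs (s' - s) < d -> dist2 (H t' s') (H t s) < e.

(* simply connected: every closed loop in S is null-homotopic in S
   (free homotopy through loops to a constant loop) *)
Definition simply_connected (S : pt -> Prop) : Prop :=
  forall c : R -> pt, continuous_path c -> c 0 = c 1 ->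
    (forall s, 0 <= s <= 1 -> S (c s)) ->
    exists H : R -> R -> pt, continuous_square H /\
      (forall s, 0 <= s <= 1 -> H 0 s = c s) /\
      (forall s, 0 <= s <= 1 -> H 1 s = H 1 0) /\
      (forall t, 0 <= t <= 1 -> H t 0 = H t 1) /\
      (forall t s, 0 <= t <= 1 -> 0 <= s <= 1 -> S (H t s)).

Definition domain (S : pt -> Prop) : Prop :=
  (exists x, S x) /\ open_set S /\ connected_set S.

Definition is_partition (t : nat -> R) (n : nat) : Prop :=
  (0 < n)%nat /\ t 0%nat = 0 /\ t n = 1 /\
  forall i, (i < n)%nat -> t i <= t (S i).

Definition poly_length (g : R -> pt) (t : nat -> R) (n : nat) : R :=
  sum_f_R0 (fun i => dist2 (g (t i)) (g (t (S i)))) (n - 1).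

Definition curve_length (g : R -> pt) (L : R) : Prop :=
  is_lub (fun s => exists t n, is_partition t n /\ s = poly_length g t n) L.

(* Lebesgue outer measure of S is <= M : for every eta > 0, S is covered by
   countably many axis-parallel rectangles of total area <= M + eta *)
Definition rect_area (r : R * R * R * R) : R :=
  let '(x1, x2, y1, y2) := r in (x2 - x1) * (y2 - y1).

Definition in_rect (r : R * R * R * R) (p : pt) : Prop :=
  let '(x1, x2, y1, y2) := r in
  x1 <= fst p <= x2 /\ y1 <= snd p <= y2.

Definition area_le (S : pt -> Prop) (M : R) : Prop :=
  forall eta, 0 < eta -> exists (rs : nat -> R * R * R * R) (l : R),
    (forall k, let '(x1, x2, y1, y2) := rs k in x1 <= x2 /\ y1 <= y2) /\
    (forall p, S p -> exists k, in_rect (rs k) p) /\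
    infinite_sum (fun k => rect_area (rs k)) l /\ l <= M + eta.

(* Main.v *)
Require Import Defs.
From Stdlib Require Import Reals.
From Stdlib Require Import Lra Lia Psatz Classical ClassicalEpsilon List FunctionalExtensionality.
Open Scope R_scope.


Lemma sq_nn : forall x, 0 <= x * x.
Proof. intros; apply Rle_0_sqr. Qed.

Lemma sqrt_sq_le_iff : forall x y, 0 <= y -> x <= y * y -> sqrt x <= y.
Proof. intros x y Hy H. rewrite <- (sqrt_square y Hy). apply sqrt_le_1_alt. lra. Qed.

Lemma dist2_pos : forall p q, 0 <= dist2 p q.
Proof. intros; unfold dist2; apply sqrt_pos. Qed.

Lemma dist2_sq : forall p q, dist2 p q * dist2 p q = (fst p - fst q)^2 + (snd p - snd q)^2.
Proof. intros; unfold dist2; apply sqrt_sqrt; apply Rplus_le_le_0_compat; apply pow2_ge_0. Qed.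

Lemma dist2_sym : forall p q, dist2 p q = dist2 q p.
Proof. intros; unfold dist2; f_equal; ring. Qed.

Lemma dist2_refl : forall p, dist2 p p = 0.
Proof. intros; unfold dist2. replace ((fst p - fst p) ^ 2 + (snd p - snd p) ^ 2) with 0 by ring. apply sqrt_0. Qed.

Lemma dist2_fst : forall p q, Rabs (fst p - fst q) <= dist2 p q.
Proof. intros [p1 p2] [q1 q2]. unfold dist2; cbn [fst snd]. rewrite <- sqrt_Rsqr_abs. apply sqrt_le_1_alt. unfold Rsqr. pose proof (sq_nn (p2-q2)); pose proof (sq_nn (p1-q1)); lra. Qed.

Lemma dist2_snd : forall p q, Rabs (snd p - snd q) <= dist2 p q.
Proof. intros [p1 p2] [q1 q2]. unfold dist2; cbn [fst snd]. rewrite <- sqrt_Rsqr_abs. apply sqrt_le_1_alt. unfold Rsqr. pose proof (sq_nn (p2-q2)); pose proof (sq_nn (p1-q1)); lra. Qed.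

Lemma cs2 : forall x1 y1 x2 y2, x1*x2 + y1*y2 <= sqrt (x1^2+y1^2) * sqrt (x2^2+y2^2).
Proof.
  intros. rewrite <- sqrt_mult by nra.
  destruct (Rle_dec (x1*x2+y1*y2) 0). { pose proof (sqrt_pos ((x1 ^ 2 + y1 ^ 2) * (x2 ^ 2 + y2 ^ 2))). lra. }
  rewrite <- (sqrt_square (x1*x2+y1*y2)) by lra. apply sqrt_le_1_alt.
  pose proof (sq_nn (x1*y2-x2*y1)). lra.
Qed.

Lemma dist2_tri : forall p q r, dist2 p r <= dist2 p q + dist2 q r.
Proof.
  intros [p1 p2] [q1 q2] [r1 r2]. unfold dist2; cbn [fst snd].
  apply sqrt_sq_le_iff. { pose proof (sqrt_pos ((p1 - q1) ^ 2 + (p2 - q2) ^ 2)). pose proof (sqrt_pos ((q1 - r1) ^ 2 + (q2 - r2) ^ 2)). lra. }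
  pose proof (cs2 (p1-q1) (p2-q2) (q1-r1) (q2-r2)).
  pose proof (sqrt_sqrt ((p1 - q1) ^ 2 + (p2 - q2) ^ 2)).
  pose proof (sqrt_sqrt ((q1 - r1) ^ 2 + (q2 - r2) ^ 2)).
  assert (0 <= (p1 - q1) ^ 2 + (p2 - q2) ^ 2) by (pose proof (pow2_ge_0 (p1-q1)); pose proof (pow2_ge_0 (p2-q2)); lra).
  assert (0 <= (q1 - r1) ^ 2 + (q2 - r2) ^ 2) by (pose proof (pow2_ge_0 (q1-r1)); pose proof (pow2_ge_0 (q2-r2)); lra).
  lra.
Qed.

Lemma dist2_vert : forall x1 y z, dist2 (x1, y) (x1, z) = Rabs (y - z).
Proof. intros. unfold dist2; cbn [fst snd]. rewrite <- sqrt_Rsqr_abs. f_equal. unfold Rsqr. ring. Qed.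

Fixpoint ssum (f : nat -> R) (n : nat) : R :=
  match n with O => 0 | S k => ssum f k + f k end.

Lemma ssum_ext : forall f g n, (forall i, (i < n)%nat -> f i = g i) -> ssum f n = ssum g n.
Proof. intros f g n; induction n; intros H; simpl; auto. rewrite IHn by (intros; apply H; lia). rewrite H by lia. auto. Qed.

Lemma ssum_le : forall f g n, (forall i, (i < n)%nat -> f i <= g i) -> ssum f n <= ssum g n.
Proof. intros f g n; induction n; intros H; simpl; [lra|]. pose proof (IHn (fun i Hi => H i ltac:(lia))). pose proof (H n ltac:(lia)). lra. Qed.

Lemma ssum_plus : forall f g n, ssum (fun i => f i + g i) n = ssum f n + ssum g n.
Proof. intros; induction n; simpl; lra. Qed.

Lemma ssum_minus : forall f g n, ssum (fun i => f i - g i) n = ssum f n - ssum g n.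
Proof. intros; induction n; simpl; lra. Qed.

Lemma ssum_scal : forall c f n, ssum (fun i => c * f i) n = c * ssum f n.
Proof. intros; induction n; simpl; [ring|]. rewrite IHn. ring. Qed.

Lemma ssum_const : forall c n, ssum (fun _ => c) n = INR n * c.
Proof. intros; induction n; cbn [ssum]; [simpl; ring|]. rewrite IHn. rewrite S_INR. ring. Qed.

Lemma ssum_nonneg : forall f n, (forall i, (i < n)%nat -> 0 <= f i) -> 0 <= ssum f n.
Proof. intros. pose proof (ssum_le (fun _ => 0) f n H). rewrite ssum_const in H0. lra. Qed.

Lemma ssum_term : forall f n i, (forall j, (j < n)%nat -> 0 <= f j) -> (i < n)%nat -> f i <= ssum f n.
Proof.
  intros f n; induction n; intros i H Hi; [lia|]. simpl.
  destruct (Nat.eq_dec i n). { subst. pose proof (ssum_nonneg f n (fun j Hj => H j ltac:(lia))). lra. }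
  pose proof (IHn i (fun j Hj => H j ltac:(lia)) ltac:(lia)). pose proof (H n ltac:(lia)). lra.
Qed.

Lemma ssum_tele : forall f n, ssum (fun i => f (S i) - f i) n = f n - f O.
Proof. intros; induction n; simpl; [ring|]. rewrite IHn. ring. Qed.

Lemma ssum_abs : forall f n, Rabs (ssum f n) <= ssum (fun i => Rabs (f i)) n.
Proof. intros; induction n; simpl. rewrite Rabs_R0; lra. eapply Rle_trans. apply Rabs_triang. lra. Qed.

Lemma ssum_double : forall f n, ssum f (2 * n) = ssum (fun i => f (2 * i)%nat + f (S (2 * i))) n.
Proof.
  intros; induction n. simpl; auto.
  replace (2 * S n)%nat with (S (S (2 * n))) by lia. cbn [ssum]. rewrite IHn. lra.
Qed.

Lemma ssum_id : forall n, ssum INR n = INR n * (INR n - 1) / 2.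
Proof. intros; induction n; cbn [ssum]. simpl; lra. rewrite IHn. rewrite S_INR. field. Qed.

Lemma sum_f_ssum : forall f k, sum_f_R0 f k = ssum f (S k).
Proof. intros; induction k; cbn [ssum sum_f_R0]. ring. rewrite IHk. cbn [ssum]. ring. Qed.

Definition good (r : R * R * R * R) : Prop :=
  let '(x1, x2, y1, y2) := r in x1 <= x2 /\ y1 <= y2.

Fixpoint lsum (l : list (R * R * R * R)) : R :=
  match l with nil => 0 | r :: l' => rect_area r + lsum l' end.

Definition covers (l : list (R*R*R*R)) (S : pt -> Prop) : Prop :=
  (forall r, In r l -> good r) /\ (forall p, S p -> exists r, In r l /\ in_rect r p).

Lemma ssum_shift : forall f n, ssum f (S n) = f O + ssum (fun k => f (S k)) n.
Proof. intros; induction n; cbn [ssum] in *. ring. rewrite IHn. ring. Qed.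

Definition z0 : R * R * R * R := (0, 0, 0, 0).

Lemma lsum_ssum : forall l N, (length l <= N)%nat ->
  ssum (fun k => rect_area (nth k l z0)) N = lsum l.
Proof.
  induction l; intros N HN.
  - simpl. transitivity (ssum (fun _ => 0) N).
    + apply ssum_ext. intros. destruct i; simpl; ring.
    + rewrite ssum_const. ring.
  - destruct N; simpl in HN; [lia|]. rewrite ssum_shift. simpl. rewrite IHl by lia. auto.
Qed.

Lemma cover_area : forall S M,
  (forall eta, 0 < eta -> exists l, covers l S /\ lsum l <= M + eta) -> area_le S M.
Proof.
  intros S M H eta Heta. destruct (H eta Heta) as [l [[Hg Hc] Hs]].
  exists (fun k => nth k l z0), (lsum l). split; [|split; [|split]].
  - intros k. destruct (nth_in_or_default k l z0) as [Hin|Hd].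
    + pose proof (Hg _ Hin). destruct (nth k l z0) as [[[? ?] ?] ?]. exact H0.
    + rewrite Hd. simpl. lra.
  - intros p Hp. destruct (Hc p Hp) as [r [Hin Hr]]. destruct (In_nth l r z0 Hin) as [k [_ Hk]].
    exists k. rewrite Hk. exact Hr.
  - intros e He. exists (length l). intros n Hn. rewrite sum_f_ssum. rewrite lsum_ssum by lia.
    unfold R_dist. rewrite Rminus_diag, Rabs_R0. lra.
  - exact Hs.
Qed.

Lemma covers_app : forall l1 l2 S1 S2, covers l1 S1 -> covers l2 S2 ->
  covers (l1 ++ l2) (fun p => S1 p \/ S2 p).
Proof.
  intros l1 l2 S1 S2 [g1 c1] [g2 c2]. split.
  - intros r Hr. apply in_app_or in Hr. destruct Hr; auto.
  - intros p [Hp|Hp]; [destruct (c1 p Hp) as [r [? ?]]|destruct (c2 p Hp) as [r [? ?]]];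
      exists r; split; auto; apply in_or_app; auto.
Qed.

Lemma lsum_app : forall l1 l2, lsum (l1 ++ l2) = lsum l1 + lsum l2.
Proof. induction l1; intros; simpl; [ring|]. rewrite IHl1. ring. Qed.

Lemma covers_mono : forall l S S', covers l S -> (forall p, S' p -> S p) -> covers l S'.
Proof. intros l S S' [g c] H. split; auto. Qed.

Lemma covers_family : forall (S : nat -> pt -> Prop) (c : nat -> R) n,
  (forall i, (i < n)%nat -> exists l, covers l (S i) /\ lsum l <= c i) ->
  exists l, covers l (fun p => exists i, (i < n)%nat /\ S i p) /\ lsum l <= ssum c n.
Proof.
  intros S c n; induction n; intros H.
  - exists nil. split. split. intros r []. intros p [i [Hi _]]. lia. simpl. lra.
  - destruct IHn as [l1 [C1 H1]]. intros; apply H; lia.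
    destruct (H n ltac:(lia)) as [l2 [C2 H2]].
    exists (l1 ++ l2). split.
    + eapply covers_mono. apply (covers_app _ _ _ _ C1 C2).
      intros p [i [Hi Hp]]. destruct (Nat.eq_dec i n). subst; right; auto. left. exists i. split; auto. lia.
    + rewrite lsum_app. simpl. lra.
Qed.

Lemma covers_single : forall (r : R*R*R*R) S, good r -> (forall p, S p -> in_rect r p) ->
  covers (r :: nil) S /\ lsum (r :: nil) = rect_area r.
Proof.
  intros r S Hg Hr. split. split. intros r' [<-|[]]; auto. intros p Hp. exists r. split; simpl; auto.
  simpl. ring.
Qed.

Lemma lub_approx : forall E m s, is_lub E m -> s < m -> exists y, E y /\ s < y.
Proof.
  intros E m s [Hub Hl] Hs. destruct (classic (exists y, E y /\ s < y)) as [H|H]; auto.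
  exfalso. assert (is_upper_bound E s). { intros y Hy. destruct (Rle_dec y s); auto. exfalso. apply H. exists y. split; auto. lra. }
  pose proof (Hl s H0). lra.
Qed.

Lemma Rabs_e : forall e : R, e = 1 \/ e = -1 -> Rabs e = 1.
Proof. intros e [-> | ->]. rewrite Rabs_right; lra. rewrite Rabs_left; lra. Qed.

Lemma ray : forall (Om : pt -> Prop) x e, Defs.open_set Om -> bounded_set Om -> Om x ->
  (e = 1 \/ e = -1) ->
  exists s, 0 < s /\ in_boundary Om (fst x, snd x + e * s) /\ ~ Om (fst x, snd x + e * s).
Proof.
  intros Om x e Hop [M HM] Hx He.
  assert (Hd : forall s1 s2, dist2 (fst x, snd x + e * s1) (fst x, snd x + e * s2) = Rabs (s1 - s2)).
  { intros. rewrite dist2_vert. replace (snd x + e * s1 - (snd x + e * s2)) with (e * (s1 - s2)) by ring.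
    rewrite Rabs_mult, Rabs_e by auto. ring. }
  set (E := fun s => 0 <= s /\ forall sg, 0 <= sg <= s -> Om (fst x, snd x + e * sg)).
  assert (HE0 : E 0).
  { split. lra. intros sg Hsg. replace sg with 0 by lra. replace (snd x + e * 0) with (snd x) by ring.
    destruct x; exact Hx. }
  assert (HEb : bound E).
  { exists (M + Rabs (snd x)). intros s [Hs0 Hs]. pose proof (HM _ (Hs s ltac:(lra))).
    pose proof (dist2_snd (fst x, snd x + e * s) (0,0)). cbn [snd] in H0.
    replace (snd x + e * s - 0) with (snd x + e * s) in H0 by ring.
    assert (Rabs (e * s) <= Rabs (snd x + e * s) + Rabs (snd x)).
    { replace (e * s) with ((snd x + e * s) - snd x) at 1 by ring. eapply Rle_trans. apply Rabs_triang.
      rewrite Rabs_Ropp. lra. }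
    rewrite Rabs_mult, Rabs_e in H1 by auto. rewrite (Rabs_right s) in H1 by lra; lra. }
  destruct (completeness E HEb (ex_intro _ 0 HE0)) as [m Hm].
  destruct (Hop x Hx) as [r [Hr Hball]].
  assert (Hrm : r / 2 <= m).
  { apply (proj1 Hm). split. lra. intros sg Hsg. apply Hball.
    replace x with (fst x, snd x + e * 0) at 1 by (destruct x; cbn; f_equal; ring).
    rewrite Hd. rewrite Rabs_left1 by lra. lra. }
  assert (Hin : forall sg, 0 <= sg < m -> Om (fst x, snd x + e * sg)).
  { intros sg Hsg. destruct (lub_approx E m sg Hm ltac:(lra)) as [y [[_ Hy] Hsy]]. apply Hy. lra. }
  assert (Hout : ~ Om (fst x, snd x + e * m)).
  { intros Hy. destruct (Hop _ Hy) as [rho [Hrho Hb]].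
    assert (E (m + rho / 2)).
    { split. lra. intros sg Hsg. destruct (Rlt_le_dec sg m). apply Hin; lra.
      apply Hb. rewrite Hd. rewrite Rabs_left1 by lra. lra. }
    pose proof (proj1 Hm _ H). lra. }
  exists m. split; [lra|split; auto].
  intros rr Hrr. split.
  - exists (fst x, snd x + e * Rmax 0 (m - rr / 2)). split.
    + rewrite Hd. unfold Rmax; destruct (Rle_dec 0 (m - rr/2)); rewrite Rabs_right by lra; lra.
    + apply Hin. unfold Rmax; destruct (Rle_dec 0 (m - rr/2)); lra.
  - exists (fst x, snd x + e * m). split; auto. rewrite Hd. rewrite Rminus_diag, Rabs_R0. lra.
Qed.

Lemma part_range : forall t n, is_partition t n -> forall i, (i <= n)%nat -> 0 <= t i <= 1.
Proof.
  intros t n [Hn [H0 [H1 Hm]]].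
  assert (Hup : forall i, (i <= n)%nat -> 0 <= t i).
  { induction i; intros Hi. lra. pose proof (Hm i ltac:(lia)). pose proof (IHi ltac:(lia)). lra. }
  assert (Hdn : forall k, (k <= n)%nat -> t (n - k)%nat <= 1).
  { induction k; intros Hk. replace (n-0)%nat with n by lia; lra.
    pose proof (Hm (n - S k)%nat ltac:(lia)). replace (S (n - S k)) with (n - k)%nat in H by lia.
    pose proof (IHk ltac:(lia)). lra. }
  intros i Hi. split. auto. replace i with (n - (n - i))%nat by lia. apply Hdn. lia.
Qed.

Lemma find_piece : forall t n, is_partition t n -> forall s, 0 <= s <= 1 ->
  exists i, (i < n)%nat /\ t i <= s <= t (S i).
Proof.
  intros t n Hp s Hs. destruct Hp as [Hn [H0 [H1 Hm]]].
  assert (forall k, (1 <= k <= n)%nat -> s <= t k -> exists i, (i < k)%nat /\ t i <= s <= t (S i)).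
  { induction k; intros Hk Hsk. lia. destruct (Nat.eq_dec k 0). subst. exists O. split. lia. lra.
    destruct (Rle_dec s (t k)). destruct (IHk ltac:(lia) r) as [i [Hi Hi']]. exists i. split; auto; lia.
    exists k. split. lia. lra. }
  destruct (H n ltac:(lia) ltac:(lra)) as [i [? ?]]. exists i; auto.
Qed.

Lemma poly_ssum : forall g t n, (0 < n)%nat ->
  poly_length g t n = ssum (fun i => dist2 (g (t i)) (g (t (S i)))) n.
Proof. intros. unfold poly_length. rewrite sum_f_ssum. f_equal. lia. Qed.

Lemma poly_le_L : forall g L t n, curve_length g L -> is_partition t n ->
  ssum (fun i => dist2 (g (t i)) (g (t (S i)))) n <= L.
Proof.
  intros g L t n HL Hp. rewrite <- poly_ssum by (destruct Hp; auto).
  apply (proj1 HL). exists t, n. auto.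
Qed.

Lemma poly_near_L : forall g L eta, curve_length g L -> 0 < eta ->
  exists t n, is_partition t n /\ L - eta < ssum (fun i => dist2 (g (t i)) (g (t (S i)))) n.
Proof.
  intros g L eta HL He. destruct (lub_approx _ L (L - eta) HL ltac:(lra)) as [y [[t [n [Hp ->]]] Hy]].
  exists t, n. split; auto. rewrite <- poly_ssum by (destruct Hp; auto). auto.
Qed.

Lemma three_point : forall g L s, curve_length g L -> 0 <= s <= 1 ->
  dist2 (g 0) (g s) + dist2 (g s) (g 1) <= L.
Proof.
  intros g L s HL Hs.
  set (t := fun j : nat => match j with O => 0 | S O => s | _ => 1 end).
  assert (is_partition t 2). { split. lia. split. reflexivity. split. reflexivity.
    intros i Hi. destruct i as [|[|]]; simpl; lra || lia. }
  pose proof (poly_le_L g L t 2 HL H). simpl in H0. lra.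
Qed.

Lemma even2 : forall i, Nat.even (2 * i) = true.
Proof. induction i. reflexivity. replace (2 * S i)%nat with (S (S (2 * i))) by lia. simpl. auto. Qed.
Lemma odd2 : forall i, Nat.even (S (2 * i)) = false.
Proof. induction i. reflexivity. replace (2 * S i)%nat with (S (S (2 * i))) by lia. simpl. simpl in IHi. auto. Qed.

Lemma doubling : forall g L t n (s : nat -> R), curve_length g L -> is_partition t n ->
  (forall i, (i < n)%nat -> t i <= s i <= t (S i)) ->
  ssum (fun i => dist2 (g (t i)) (g (s i)) + dist2 (g (s i)) (g (t (S i)))) n <= L.
Proof.
  intros g L t n s HL Hp Hs.
  set (t' := fun j => if Nat.even j then t (Nat.div2 j) else s (Nat.div2 j)).
  assert (E1 : forall i, t' (2 * i)%nat = t i). { intros. unfold t'. rewrite even2, Nat.div2_double. auto. }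
  assert (E2 : forall i, t' (S (2 * i)) = s i). { intros. unfold t'. rewrite odd2, Nat.div2_succ_double. auto. }
  assert (E3 : forall i, t' (S (S (2 * i))) = t (S i)).
  { intros. replace (S (S (2 * i))) with (2 * S i)%nat by lia. apply E1. }
  destruct Hp as [Hn [H0 [H1 Hm]]].
  assert (Hp' : is_partition t' (2 * n)).
  { split. lia. split. replace O with (2 * 0)%nat by lia. rewrite E1. auto. split. rewrite E1. auto.
    intros j Hj. destruct (Nat.Even_or_Odd j) as [[i ->]|[i ->]].
    - rewrite E1. replace (S (2 * i)) with (S (2*i)) by lia. rewrite E2. apply Hs. lia.
    - replace (2 * i + 1)%nat with (S (2 * i)) by lia. rewrite E2, E3. apply Hs. lia. }
  pose proof (poly_le_L g L t' (2 * n) HL Hp'). rewrite ssum_double in H.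
  erewrite ssum_ext. apply H. intros i Hi. cbn beta. rewrite E1, E2, E3. auto.
Qed.

Definition excess (g : R -> pt) (t : nat -> R) i s :=
  dist2 (g (t i)) (g s) + dist2 (g s) (g (t (S i))) - dist2 (g (t i)) (g (t (S i))).

Lemma excess_nn : forall g t i s, 0 <= excess g t i s.
Proof. intros. unfold excess. pose proof (dist2_tri (g (t i)) (g s) (g (t (S i)))). lra. Qed.

Lemma excess_sum : forall g L t n eta (s : nat -> R), curve_length g L -> is_partition t n ->
  L - eta < ssum (fun i => dist2 (g (t i)) (g (t (S i)))) n ->
  (forall i, (i < n)%nat -> t i <= s i <= t (S i)) ->
  ssum (fun i => excess g t i (s i)) n <= eta.
Proof.
  intros. pose proof (doubling g L t n s H H0 H2). unfold excess. rewrite ssum_minus. lra.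
Qed.

Lemma excess_sup : forall g L t n eta, curve_length g L -> is_partition t n -> 0 < eta ->
  L - eta < ssum (fun i => dist2 (g (t i)) (g (t (S i)))) n ->
  exists e : nat -> R, (forall i, 0 <= e i) /\ ssum e n <= eta /\
    forall i s, (i < n)%nat -> t i <= s <= t (S i) -> excess g t i s <= e i.
Proof.
  intros g L t n eta HL Hp He Hpoly.
  set (E := fun i x => x = 0 \/ ((i < n)%nat /\ exists s, t i <= s <= t (S i) /\ x = excess g t i s)).
  assert (Hb : forall i, is_upper_bound (E i) eta).
  { intros i x [->|[Hi [s [Hs ->]]]]. lra.
    set (s' := fun j => if Nat.eq_dec j i then s else t j).
    assert (Hs' : forall j, (j < n)%nat -> t j <= s' j <= t (S j)).
    { intros j Hj. unfold s'. destruct (Nat.eq_dec j i). subst; auto. pose proof (proj2 (proj2 (proj2 Hp)) j Hj). lra. }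
    pose proof (excess_sum g L t n eta s' HL Hp Hpoly Hs').
    pose proof (ssum_term (fun j => excess g t j (s' j)) n i (fun j _ => excess_nn g t j (s' j)) Hi).
    cbn beta in H0. assert (Hsi : s' i = s) by (unfold s'; destruct (Nat.eq_dec i i); congruence). rewrite Hsi in H0. lra. }
  set (e := fun i => proj1_sig (completeness (E i) (ex_intro _ eta (Hb i)) (ex_intro _ 0 (or_introl eq_refl)))).
  assert (He_lub : forall i, is_lub (E i) (e i)). { intros. unfold e. destruct completeness. auto. }
  exists e. split; [|split].
  - intros i. apply (proj1 (He_lub i)). left; auto.
  - destruct (Rle_dec (ssum e n) eta) as [|Hgt]; auto. exfalso.
    assert (Hn : (0 < n)%nat) by (destruct Hp; auto).
    set (gam := (ssum e n - eta) / (2 * INR n)).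
    assert (Hgam : 0 < gam). { unfold gam. apply Rdiv_lt_0_compat. lra. pose proof (lt_0_INR n Hn). lra. }
    assert (Hc : forall i, exists s, (i < n)%nat -> t i <= s <= t (S i) /\ e i - gam <= excess g t i s).
    { intros i. destruct (Nat.lt_ge_cases i n) as [Hi|Hi]; [|exists 0; intros; lia].
      destruct (lub_approx (E i) (e i) (e i - gam) (He_lub i) ltac:(lra)) as [x [[->|[_ [s [Hs ->]]]] Hx]].
      - exists (t i). intros _. split. pose proof (proj2 (proj2 (proj2 Hp)) i Hi). lra.
        pose proof (excess_nn g t i (t i)). lra.
      - exists s. intros _. split; auto. lra. }
    set (sf := fun i => proj1_sig (constructive_indefinite_description _ (Hc i))).
    assert (Hsf : forall i, (i < n)%nat -> t i <= sf i <= t (S i) /\ e i - gam <= excess g t i (sf i)).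
    { intros i Hi. unfold sf. destruct constructive_indefinite_description. simpl. auto. }
    pose proof (excess_sum g L t n eta sf HL Hp Hpoly (fun i Hi => proj1 (Hsf i Hi))).
    pose proof (ssum_le (fun i => e i - gam) (fun i => excess g t i (sf i)) n (fun i Hi => proj2 (Hsf i Hi))).
    rewrite ssum_minus, ssum_const in H0.
    assert (INR n * gam = (ssum e n - eta) / 2). { unfold gam. field. pose proof (lt_0_INR n Hn). lra. }
    lra.
  - intros i s Hi Hs. apply (proj1 (He_lub i)). right. split; auto. exists s; auto.
Qed.

Lemma fatten : forall P Q y e, 0 <= e -> dist2 P y + dist2 y Q <= dist2 P Q + e ->
  exists t z1 z2, 0 <= t <= 1 /\ z1 * z1 + z2 * z2 <= e * (2 * dist2 P Q + e) / 4 /\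
    y = (fst P + t * (fst Q - fst P) + z1, snd P + t * (snd Q - snd P) + z2).
Proof.
  intros [p1 p2] [q1 q2] [y1 y2] e He H. cbn [fst snd].
  pose proof (dist2_sq (p1,p2) (y1,y2)) as HA. pose proof (dist2_sq (y1,y2) (q1,q2)) as HB.
  pose proof (dist2_sq (p1,p2) (q1,q2)) as Hl. cbn [fst snd] in HA, HB, Hl.
  pose proof (dist2_tri (p1,p2) (y1,y2) (q1,q2)) as Htri.
  set (A := dist2 (p1, p2) (y1, y2)) in *. set (B := dist2 (y1, y2) (q1, q2)) in *.
  set (l := dist2 (p1, p2) (q1, q2)) in *.
  pose proof (dist2_pos (p1,p2) (y1,y2)). pose proof (dist2_pos (y1,y2) (q1,q2)). pose proof (dist2_pos (p1,p2) (q1,q2)).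
  fold A B l in H0, H1, H2.
  assert (Hr : 0 <= e * (2 * l + e) / 4). { apply Rmult_le_pos; [apply Rmult_le_pos|]; lra. }
  destruct (Req_dec (A + B) 0) as [HS|HS].
  - exists 0, (y1 - p1), (y2 - p2). split. lra. split.
    + assert (A = 0) by lra. rewrite H3 in HA. replace ((p1 - y1) ^ 2 + (p2 - y2) ^ 2) with ((y1 - p1) * (y1 - p1) + (y2 - p2) * (y2 - p2)) in HA by ring. lra.
    + f_equal; ring.
  - set (S := A + B) in *. set (t := A / S).
    exists t, (y1 - p1 - t * (q1 - p1)), (y2 - p2 - t * (q2 - p2)). split; [|split].
    + assert (0 < S) by lra. unfold t. split. apply Rmult_le_pos; [lra| left; apply Rinv_0_lt_compat; lra]. apply (Rmult_le_reg_r S); [lra|]. unfold Rdiv; rewrite Rmult_assoc, Rinv_l by lra. unfold S; lra.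
    + set (z1 := y1 - p1 - t * (q1 - p1)). set (z2 := y2 - p2 - t * (q2 - p2)).
      assert (E1 : S * z1 = B * (y1 - p1) + A * (y1 - q1)). { unfold z1, t, S. field. fold S. auto. }
      assert (E2 : S * z2 = B * (y2 - p2) + A * (y2 - q2)). { unfold z2, t, S. field. fold S. auto. }
      assert (E3 : (S * z1) * (S * z1) + (S * z2) * (S * z2) = A * B * (S * S - l * l)).
      { rewrite E1, E2. unfold S.
        replace ((B * (y1 - p1) + A * (y1 - q1)) * (B * (y1 - p1) + A * (y1 - q1)) +
                 (B * (y2 - p2) + A * (y2 - q2)) * (B * (y2 - p2) + A * (y2 - q2)))
          with (B * B * ((p1 - y1) ^ 2 + (p2 - y2) ^ 2) + A * A * ((y1 - q1) ^ 2 + (y2 - q2) ^ 2)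
                + A * B * (((p1 - y1) ^ 2 + (p2 - y2) ^ 2) + ((y1 - q1) ^ 2 + (y2 - q2) ^ 2) - ((p1 - q1) ^ 2 + (p2 - q2) ^ 2))) by ring.
        rewrite <- HA, <- HB, <- Hl. ring. }
      assert (Hpos : 0 < S) by lra.
      assert (HSl : S * S - l * l <= e * (2 * l + e)).
      { clearbody S.
        assert (S * S <= (l + e) * (l + e)) by (apply Rmult_le_compat; lra). lra. }
      assert (HSl0 : 0 <= S * S - l * l). { assert (l * l <= S * S) by (apply Rmult_le_compat; lra). lra. }
      assert (HAB : A * B <= S * S / 4). { unfold S. pose proof (sq_nn (A - B)). lra. }
      assert (HAB0 : 0 <= A * B) by (apply Rmult_le_pos; lra).
      assert (S * S * (z1 * z1 + z2 * z2) <= S * S * (e * (2 * l + e) / 4)).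
      { replace (S * S * (z1 * z1 + z2 * z2)) with ((S * z1) * (S * z1) + (S * z2) * (S * z2)) by ring.
        rewrite E3. apply Rle_trans with (S * S / 4 * (S * S - l * l)).
        apply Rmult_le_compat_r; lra.
        replace (S * S * (e * (2 * l + e) / 4)) with (S * S / 4 * (e * (2 * l + e))) by field.
        apply Rmult_le_compat_l. pose proof (sq_nn S). lra. lra. }
      apply Rmult_le_reg_l with (S * S). apply Rmult_lt_0_compat; lra. lra.
    + f_equal; ring.
Qed.

Lemma abs_inv : forall x a, Rabs x <= a -> - a <= x <= a.
Proof. intros x a H. unfold Rabs in H. destruct (Rcase_abs x); lra. Qed.

Lemma abs_intro : forall x a, - a <= x <= a -> Rabs x <= a.
Proof. intros x a H. unfold Rabs. destruct (Rcase_abs x); lra. Qed.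

Lemma sq_bound : forall z r, 0 <= r -> z * z <= r * r -> Rabs z <= r.
Proof.
  intros z r Hr H. apply abs_intro. split.
  - destruct (Rle_dec (-r) z); auto. assert (r < -z) by lra. assert (r * r < (-z) * (-z)) by (apply Rmult_le_0_lt_compat; lra). lra.
  - destruct (Rle_dec z r); auto. assert (r < z) by lra. assert (r * r < z * z) by (apply Rmult_le_0_lt_compat; lra). lra.
Qed.

Definition off (a1 a2 k : R) (x : pt) := snd x - a2 - k * (fst x - a1).

Lemma strip_box : forall a1 a2 k p1 p2 q1 q2 r t0 h, 0 <= r -> 0 <= h ->
  let DX := q1 - p1 in let Do := (q2 - p2) - k * (q1 - p1) in
  let c := (p2 - a2 - k * (p1 - a1)) + t0 * Do in
  let om := Rabs DX * h + r in
  let sg := Rabs Do * h + (1 + Rabs k) * r in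
  exists box, good box /\
   (forall x, (exists t z1 z2, t0 <= t <= t0 + h /\ z1 * z1 + z2 * z2 <= r * r /\
        fst x = p1 + t * DX + z1 /\
        Rmin 0 (off a1 a2 k (p1 + t * DX + z1, p2 + t * (q2 - p2) + z2)) <= off a1 a2 k x <=
        Rmax 0 (off a1 a2 k (p1 + t * DX + z1, p2 + t * (q2 - p2) + z2))) -> in_rect box x) /\
   rect_area box <= (Rabs DX * h + 2 * r) * (Rabs c + 2 * sg + 2 * Rabs k * om).
Proof.
  intros a1 a2 k p1 p2 q1 q2 r t0 h Hr Hh DX Do c om sg.
  set (x0 := p1 + t0 * DX). set (base := a2 + k * (x0 - a1)).
  exists (x0 + Rmin 0 (h * DX) - r, x0 + Rmax 0 (h * DX) + r,
          base + Rmin 0 (c - sg) - Rabs k * om, base + Rmax 0 (c + sg) + Rabs k * om).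
  assert (Hk : 0 <= Rabs k) by apply Rabs_pos. assert (HDX : 0 <= Rabs DX) by apply Rabs_pos.
  assert (HDo : 0 <= Rabs Do) by apply Rabs_pos.
  assert (Hom : 0 <= om) by (unfold om; pose proof (Rmult_le_pos _ _ HDX Hh); lra).
  assert (Hsg : 0 <= sg) by (unfold sg; pose proof (Rmult_le_pos _ _ HDo Hh); pose proof (Rmult_le_pos (1 + Rabs k) r ltac:(lra) Hr); lra).
  assert (Hkom : 0 <= Rabs k * om) by (apply Rmult_le_pos; lra).
  split; [|split].
  - simpl. split; unfold Rmin, Rmax; destruct (Rle_dec 0 (h * DX)); try destruct (Rle_dec 0 (c - sg)); try destruct (Rle_dec 0 (c + sg)); lra.
  - intros [x1 x2] [t [z1 [z2 [Ht [Hz [Hx Ho]]]]]]. cbn [fst] in Hx.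
    pose proof (sq_bound z1 r Hr ltac:(pose proof (sq_nn z2); lra)) as Hz1.
    pose proof (sq_bound z2 r Hr ltac:(pose proof (sq_nn z1); lra)) as Hz2.
    apply abs_inv in Hz1. apply abs_inv in Hz2.
    assert (HtX : Rmin 0 (h * DX) <= (t - t0) * DX <= Rmax 0 (h * DX)).
    { unfold Rmin, Rmax. destruct (Rle_dec 0 (h * DX)); destruct (Rle_dec 0 DX).
      - split. apply Rmult_le_pos; lra. apply Rmult_le_compat_r; lra.
      - assert (h = 0). { destruct (Req_dec h 0); auto. exfalso. pose proof (Rmult_lt_0_compat h (-DX) ltac:(lra) ltac:(lra)). lra. }
        subst h. replace t with t0 by lra. lra.
      - assert (0 <= h * DX) by (apply Rmult_le_pos; lra). lra.
      - split. replace ((t - t0) * DX) with (- ((t - t0) * - DX)) by ring. replace (h * DX) with (- (h * - DX)) by ring.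
        apply Ropp_le_contravar. apply Rmult_le_compat_r; lra.
        replace ((t - t0) * DX) with (- ((t - t0) * - DX)) by ring. pose proof (Rmult_le_pos (t - t0) (-DX) ltac:(lra) ltac:(lra)). lra. }
    assert (HtX' : Rabs ((t - t0) * DX) <= Rabs DX * h).
    { rewrite Rabs_mult, Rmult_comm. apply Rmult_le_compat_l. lra. rewrite Rabs_right; lra. }
    assert (Hfx : Rabs (x1 - x0) <= om).
    { unfold om. replace (x1 - x0) with ((t - t0) * DX + z1) by (unfold x0; rewrite Hx; ring).
      eapply Rle_trans. apply Rabs_triang. pose proof (abs_intro z1 r ltac:(lra)). lra. }
    assert (Hkx : Rabs (k * (x1 - x0)) <= Rabs k * om).
    { rewrite Rabs_mult. apply Rmult_le_compat_l; lra. }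
    apply abs_inv in Hkx.
    set (oy := off a1 a2 k (p1 + t * DX + z1, p2 + t * (q2 - p2) + z2)) in *.
    assert (Hoy : Rabs (oy - c) <= sg).
    { unfold oy, off, c, sg; cbn [fst snd].
      replace (p2 + t * (q2 - p2) + z2 - a2 - k * (p1 + t * DX + z1 - a1) - (p2 - a2 - k * (p1 - a1) + t0 * Do))
        with ((t - t0) * Do + (z2 - k * z1)) by (unfold Do, DX; ring).
      eapply Rle_trans. apply Rabs_triang. apply Rplus_le_compat.
      rewrite Rabs_mult, Rmult_comm. apply Rmult_le_compat_l. lra. rewrite Rabs_right; lra.
      eapply Rle_trans. apply Rabs_triang. rewrite Rabs_Ropp, Rabs_mult.
      pose proof (abs_intro z1 r ltac:(lra)). pose proof (abs_intro z2 r ltac:(lra)).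
      assert (Rabs k * Rabs z1 <= Rabs k * r) by (apply Rmult_le_compat_l; lra). lra. }
    apply abs_inv in Hoy.
    unfold off in Ho. cbn [fst snd] in Ho.
    assert (Hx2 : x2 = base + k * (x1 - x0) + (x2 - a2 - k * (x1 - a1))) by (unfold base; ring).
    simpl. split.
    + rewrite Hx. unfold x0. lra.
    + rewrite Hx2. unfold Rmin, Rmax in *.
      destruct (Rle_dec 0 oy); destruct (Rle_dec 0 (c - sg)); destruct (Rle_dec 0 (c + sg)); lra.
  - simpl.
    assert (Hw : x0 + Rmax 0 (h * DX) + r - (x0 + Rmin 0 (h * DX) - r) = Rabs DX * h + 2 * r).
    { assert (Rabs DX * h = Rabs (h * DX)) by (rewrite Rabs_mult, (Rabs_right h) by lra; ring).
      rewrite H. unfold Rmin, Rmax. destruct (Rle_dec 0 (h * DX)); [rewrite Rabs_right|rewrite Rabs_left]; lra. }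
    rewrite Hw. apply Rmult_le_compat_l. pose proof (Rmult_le_pos _ _ HDX Hh). lra.
    unfold Rmin, Rmax. unfold Rabs. destruct (Rcase_abs c); destruct (Rle_dec 0 (c - sg)); destruct (Rle_dec 0 (c + sg)); lra.
Qed.

Lemma div_nn : forall a b, 0 <= a -> 0 < b -> 0 <= a / b.
Proof. intros. unfold Rdiv. apply Rmult_le_pos; auto. left; apply Rinv_0_lt_compat; auto. Qed.

Lemma find_strip : forall m : nat, (0 < m)%nat -> forall t, 0 <= t <= 1 ->
  exists j, (j < m)%nat /\ INR j / INR m <= t <= INR j / INR m + 1 / INR m.
Proof.
  intros m Hm t Ht. assert (HM : 0 < INR m) by (apply lt_0_INR; auto).
  assert (forall k, (1 <= k <= m)%nat -> t <= INR k / INR m -> exists j, (j < k)%nat /\ INR j / INR m <= t <= INR j / INR m + 1 / INR m).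
  { induction k; intros Hk Htk. lia. destruct (Nat.eq_dec k 0).
    - subst. exists O. split. lia. simpl in *. split. unfold Rdiv; rewrite Rmult_0_l; lra.
      replace (0 / INR m + 1 / INR m) with (1 / INR m) by (field; lra). auto.
    - destruct (Rle_dec t (INR k / INR m)). destruct (IHk ltac:(lia) r) as [j [Hj Hj']]. exists j. split; auto; lia.
      exists k. split. lia. split. lra. rewrite S_INR in Htk. replace (INR k / INR m + 1 / INR m) with ((INR k + 1) / INR m) by (field; lra). auto. }
  destruct (H m ltac:(lia)) as [j [? ?]]. replace (INR m / INR m) with 1 by (field; lra). lra. exists j; auto.
Qed.

Lemma edge_cover : forall a1 a2 k p1 p2 q1 q2 r (m : nat) H, 0 <= r -> (0 < m)%nat ->
  let DX := q1 - p1 in let Do := (q2 - p2) - k * (q1 - p1) in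
  let oP := p2 - a2 - k * (p1 - a1) in let oQ := q2 - a2 - k * (q1 - a1) in
  Rabs oP <= H -> Rabs oQ <= H ->
  let M := INR m in
  let om := Rabs DX / M + r in
  let sg := Rabs Do / M + (1 + Rabs k) * r in
  exists l, covers l (fun x => exists t z1 z2, 0 <= t <= 1 /\ z1 * z1 + z2 * z2 <= r * r /\
        fst x = p1 + t * DX + z1 /\
        Rmin 0 (off a1 a2 k (p1 + t * DX + z1, p2 + t * (q2 - p2) + z2)) <= off a1 a2 k x <=
        Rmax 0 (off a1 a2 k (p1 + t * DX + z1, p2 + t * (q2 - p2) + z2))) /\
   lsum l <= Rabs DX * (Rabs oP + Rabs oQ) / 2 + Rabs DX * H / (2 * M) + 2 * r * M * H
             + (Rabs DX + 2 * r * M) * (2 * sg + 2 * Rabs k * om).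
Proof.
  intros a1 a2 k p1 p2 q1 q2 r m H Hr Hm DX Do oP oQ HP HQ M om sg.
  assert (HM : 0 < M) by (apply lt_0_INR; auto).
  set (cj := fun j : nat => (Rabs DX * (1 / M) + 2 * r) * (Rabs (oP + (INR j / M) * Do) + 2 * sg + 2 * Rabs k * om)).
  destruct (covers_family (fun j x => exists t z1 z2, INR j / M <= t <= INR j / M + 1 / M /\ z1 * z1 + z2 * z2 <= r * r /\
        fst x = p1 + t * DX + z1 /\
        Rmin 0 (off a1 a2 k (p1 + t * DX + z1, p2 + t * (q2 - p2) + z2)) <= off a1 a2 k x <=
        Rmax 0 (off a1 a2 k (p1 + t * DX + z1, p2 + t * (q2 - p2) + z2))) cj m) as [l [Hc Hs]].
  { intros j Hj.
    destruct (strip_box a1 a2 k p1 p2 q1 q2 r (INR j / M) (1 / M) Hr ltac:(unfold Rdiv; rewrite Rmult_1_l; left; apply Rinv_0_lt_compat; lra))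
      as [box [Hg [Hin Ha]]].
    exists (box :: nil). destruct (covers_single box _ Hg Hin) as [C E]. split. exact C. rewrite E.
    eapply Rle_trans. apply Ha. unfold cj, sg, om, DX, oP, Do. right. unfold Rdiv. ring. }
  exists l. split.
  - eapply covers_mono. apply Hc. intros x [t [z1 [z2 [Ht Hrest]]]].
    destruct (find_strip m Hm t Ht) as [j [Hj Hj']]. exists j. split; auto. exists t, z1, z2. split; auto.
  - eapply Rle_trans. apply Hs.
    assert (Hcj : forall j, (j < m)%nat -> cj j <= (Rabs DX / M) * ((1 - INR j / M) * Rabs oP + (INR j / M) * Rabs oQ)
                                          + 2 * r * H + (Rabs DX / M + 2 * r) * (2 * sg + 2 * Rabs k * om)).
    { intros j Hj. unfold cj.
      assert (Hjm : 0 <= INR j / M <= 1). { split. apply div_nn; auto. apply pos_INR.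
        unfold Rdiv. rewrite <- (Rinv_r M) by lra. apply Rmult_le_compat_r. left; apply Rinv_0_lt_compat; lra. apply le_INR; lia. }
      assert (Hc1 : Rabs (oP + INR j / M * Do) <= (1 - INR j / M) * Rabs oP + (INR j / M) * Rabs oQ).
      { replace (oP + INR j / M * Do) with ((1 - INR j / M) * oP + (INR j / M) * oQ) by (unfold oP, oQ, Do; ring).
        eapply Rle_trans. apply Rabs_triang. rewrite !Rabs_mult, (Rabs_right (1 - INR j / M)), (Rabs_right (INR j / M)) by lra. lra. }
      assert (Hc2 : (1 - INR j / M) * Rabs oP + (INR j / M) * Rabs oQ <= H).
      { assert ((1 - INR j / M) * Rabs oP <= (1 - INR j / M) * H) by (apply Rmult_le_compat_l; lra).
        assert ((INR j / M) * Rabs oQ <= (INR j / M) * H) by (apply Rmult_le_compat_l; lra). lra. }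
      assert (HDX : 0 <= Rabs DX) by apply Rabs_pos.
      assert (HDXM : 0 <= Rabs DX / M) by (apply div_nn; lra).
      replace (Rabs DX * (1 / M)) with (Rabs DX / M) by (field; lra).
      assert (Hq : 0 <= 2 * sg + 2 * Rabs k * om).
      { unfold sg, om. pose proof (Rabs_pos Do). pose proof (Rabs_pos k).
        assert (0 <= Rabs Do / M) by (apply div_nn; lra).
        assert (0 <= (1 + Rabs k) * r) by (apply Rmult_le_pos; lra).
        assert (0 <= Rabs k * (Rabs DX / M + r)) by (apply Rmult_le_pos; lra). lra. }
      assert ((Rabs DX / M) * Rabs (oP + INR j / M * Do) <= (Rabs DX / M) * ((1 - INR j / M) * Rabs oP + (INR j / M) * Rabs oQ))
        by (apply Rmult_le_compat_l; lra).
      assert (2 * r * Rabs (oP + INR j / M * Do) <= 2 * r * H) by (apply Rmult_le_compat_l; lra). lra. }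
    eapply Rle_trans. apply (ssum_le _ _ m Hcj).
    rewrite !ssum_plus, ssum_scal, !ssum_const.
    rewrite ssum_plus.
    assert (E1 : ssum (fun i => (1 - INR i / M) * Rabs oP) m = Rabs oP * (M + 1) / 2).
    { transitivity (ssum (fun i => Rabs oP + (- Rabs oP / M) * INR i) m).
      apply ssum_ext. intros. field. lra.
      rewrite ssum_plus, ssum_const, ssum_scal, ssum_id. fold M. field. lra. }
    assert (E2 : ssum (fun i => INR i / M * Rabs oQ) m = Rabs oQ * (M - 1) / 2).
    { transitivity (ssum (fun i => (Rabs oQ / M) * INR i) m).
      apply ssum_ext. intros. field. lra.
      rewrite ssum_scal, ssum_id. fold M. field. lra. }
    rewrite E1, E2. fold M.
    assert (Rabs DX / M * (Rabs oP * (M + 1) / 2 + Rabs oQ * (M - 1) / 2)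
            = Rabs DX * (Rabs oP + Rabs oQ) / 2 + Rabs DX * (Rabs oP - Rabs oQ) / (2 * M)) by (field; lra).
    rewrite H0.
    assert (Rabs DX * (Rabs oP - Rabs oQ) / (2 * M) <= Rabs DX * H / (2 * M)).
    { unfold Rdiv. apply Rmult_le_compat_r. left; apply Rinv_0_lt_compat; lra. apply Rmult_le_compat_l. apply Rabs_pos.
      pose proof (Rabs_pos oQ). lra. }
    assert (M * ((Rabs DX / M + 2 * r) * (2 * sg + 2 * Rabs k * om)) = (Rabs DX + 2 * r * M) * (2 * sg + 2 * Rabs k * om)) by (field; lra).
    lra.
Qed.

Lemma sq_le_le : forall p y, 0 <= y -> p * p <= y * y -> p <= y.
Proof. intros. pose proof (sq_bound p y H H0). pose proof (Rle_abs p). lra. Qed.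

Lemma amgm : forall p x l lam, 0 <= x -> 0 <= l -> 0 < lam -> p * p <= 2 * l * x ->
  p <= x / lam + lam * l / 2.
Proof.
  intros p x l lam Hx Hl Hlam H. apply sq_le_le.
  assert (0 <= x / lam) by (unfold Rdiv; apply Rmult_le_pos; [lra|left; apply Rinv_0_lt_compat; lra]).
  assert (0 <= lam * l / 2) by (unfold Rdiv; apply Rmult_le_pos; [apply Rmult_le_pos; lra|lra]). lra.
  pose proof (sq_nn (x / lam - lam * l / 2)).
  assert (x / lam * (lam * l / 2) = x * l / 2) by (field; lra). lra.
Qed.


Lemma discrete_main : forall (u v : nat -> R) (n : nat) (lam mu kap : R),
  v O = 0 -> v n = 0 -> 0 < lam -> 0 < mu ->
  let du := fun i => u (S i) - u i in let dv := fun i => v (S i) - v i in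
  let l := fun i => sqrt (du i ^ 2 + dv i ^ 2) in
  let Lam := ssum l n in let X := Lam - ssum (fun i => Rabs (du i)) n in
  ssum (fun i => Rabs (du i - kap * dv i) * (Rabs (v i) + Rabs (v (S i))) / 2) n
    <= X / lam + lam * (Lam * Lam * Lam) / 24 + Rabs kap * ((X / mu + mu * Lam / 2) * (X / mu + mu * Lam / 2)).
Proof.
  intros u v n lam mu kap Hv0 Hvn Hlam Hmu du dv l Lam X.
  set (w := fun i => Rabs (v i)).
  set (x := fun i => l i - Rabs (du i)).
  assert (Hl2 : forall i, l i * l i = du i * du i + dv i * dv i).
  { intros. unfold l. rewrite sqrt_sqrt. ring. pose proof (pow2_ge_0 (du i)). pose proof (pow2_ge_0 (dv i)). lra. }
  assert (Hl0 : forall i, 0 <= l i) by (intros; apply sqrt_pos).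
  assert (Hdul : forall i, Rabs (du i) <= l i).
  { intros. apply sq_le_le. auto. rewrite <- Rabs_mult, Rabs_right by apply Rle_ge, sq_nn. rewrite Hl2. pose proof (sq_nn (dv i)). lra. }
  assert (Hx0 : forall i, 0 <= x i) by (intros; unfold x; pose proof (Hdul i); lra).
  assert (Hdv2 : forall i, dv i * dv i <= 2 * l i * x i).
  { intros. unfold x. pose proof (Hdul i). pose proof (Hl0 i).
    assert (dv i * dv i = l i * l i - Rabs (du i) * Rabs (du i)). { rewrite Hl2. rewrite <- Rabs_mult, Rabs_right by apply Rle_ge, sq_nn. ring. }
    rewrite H1. assert (0 <= Rabs (du i)) by apply Rabs_pos.
    assert ((l i - Rabs (du i)) * Rabs (du i) <= (l i - Rabs (du i)) * l i) by (apply Rmult_le_compat_l; lra). lra. }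
  assert (HX : ssum x n = X). { unfold X, x. rewrite ssum_minus. auto. }
  set (sL := fun i => ssum l i).
  set (c := fun i => (Lam - sL i - sL (S i)) / 2).
  assert (Hid : ssum (fun i => l i * (w i + w (S i)) / 2) n = ssum (fun i => (w (S i) - w i) * c i) n).
  { set (phi := fun i => w i * (2 * sL i - Lam) / 2).
    assert (ssum (fun i => l i * (w i + w (S i)) / 2 - (w (S i) - w i) * c i) n = 0).
    { transitivity (ssum (fun i => phi (S i) - phi i) n).
      apply ssum_ext. intros i _. unfold phi, c, sL. cbn [ssum]. field.
      rewrite ssum_tele. unfold phi, w. rewrite Hvn, Hv0, Rabs_R0. field. }
    rewrite ssum_minus in H. lra. }
  assert (Hb : forall i, (w (S i) - w i) * c i <= x i / lam + lam * (l i * c i * c i) / 2).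
  { intros. eapply Rle_trans. apply Rle_abs. rewrite Rabs_mult.
    assert (Rabs (w (S i) - w i) <= Rabs (dv i)). { unfold w, dv. apply Rabs_triang_inv2. }
    eapply Rle_trans. apply Rmult_le_compat_r. apply Rabs_pos. exact H.
    rewrite <- Rabs_mult. assert (0 <= c i * c i) by apply sq_nn.
    apply amgm; auto. replace (l i * c i * c i) with (l i * (c i * c i)) by ring. apply Rmult_le_pos; auto.
    replace (Rabs (dv i * c i) * Rabs (dv i * c i)) with ((dv i * dv i) * (c i * c i)) by (rewrite <- Rabs_mult, Rabs_right by (apply Rle_ge, sq_nn); ring).
    replace (2 * (l i * c i * c i) * x i) with ((2 * l i * x i) * (c i * c i)) by ring.
    apply Rmult_le_compat_r; auto. }
  assert (Hc : ssum (fun i => l i * c i * c i) n <= Lam * Lam * Lam / 12).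
  { set (A := fun i => Lam / 2 - sL i).
    assert (forall i, l i * c i * c i <= (A i * A i * A i - A (S i) * A (S i) * A (S i)) / 3).
    { intros. assert (HA : A (S i) = A i - l i) by (unfold A, sL; cbn [ssum]; ring).
      assert (Hci : c i = (A i + A (S i)) / 2) by (unfold c, A; field).
      rewrite Hci, HA. pose proof (Hl0 i). assert (0 <= l i * l i * l i) by (apply Rmult_le_pos; [apply sq_nn|auto]). lra. }
    eapply Rle_trans. apply (ssum_le _ _ n (fun i _ => H i)).
    transitivity (ssum (fun i => - ((A (S i) * A (S i) * A (S i)) / 3 - (A i * A i * A i) / 3)) n).
    right. apply ssum_ext. intros. field.
    replace (ssum (fun i => - ((A (S i) * A (S i) * A (S i)) / 3 - (A i * A i * A i) / 3)) n)
      with (- ssum (fun i => (A (S i) * A (S i) * A (S i)) / 3 - (A i * A i * A i) / 3) n).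
    2: { rewrite <- (Rmult_1_l (ssum _ n)) at 1. replace (- (1 * ssum (fun i => A (S i) * A (S i) * A (S i) / 3 - A i * A i * A i / 3) n)) with ((-1) * ssum (fun i => A (S i) * A (S i) * A (S i) / 3 - A i * A i * A i / 3) n) by ring.
         rewrite <- ssum_scal. apply ssum_ext. intros. ring. }
    rewrite (ssum_tele (fun i => A i * A i * A i / 3)). unfold A. fold Lam. unfold sL. fold Lam. cbn [ssum]. right. field. }
  set (V := ssum (fun i => Rabs (dv i)) n).
  assert (HwV : forall i, (i <= n)%nat -> w i <= V).
  { intros i Hi. unfold w. replace (v i) with (v i - v O) by (rewrite Hv0; ring).
    rewrite <- (ssum_tele v i). eapply Rle_trans. apply ssum_abs. unfold V.
    assert (forall j, ssum (fun i0 => Rabs (dv i0)) j <= ssum (fun i0 => Rabs (dv i0)) (j + (n - j))).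
    { intros j. induction (n - j)%nat. rewrite Nat.add_0_r. lra. rewrite Nat.add_succ_r. cbn [ssum]. pose proof (Rabs_pos (dv (j + n0)%nat)). lra. }
    pose proof (H i). replace (i + (n - i))%nat with n in H0 by lia. apply H0. }
  assert (HV : V <= X / mu + mu * Lam / 2).
  { unfold V. eapply Rle_trans. apply (ssum_le _ (fun i => / mu * x i + (mu / 2) * l i)).
    intros i _. replace (/ mu * x i + mu / 2 * l i) with (x i / mu + mu * l i / 2) by (field; lra).
    apply amgm; auto. rewrite <- Rabs_mult, Rabs_right by (apply Rle_ge, sq_nn). apply Hdv2.
    rewrite ssum_plus, !ssum_scal, HX. right. fold Lam. field. lra. }
  assert (HV0 : 0 <= V) by (apply ssum_nonneg; intros; apply Rabs_pos).
  assert (Hterm : forall i, (i < n)%nat -> Rabs (du i - kap * dv i) * (Rabs (v i) + Rabs (v (S i))) / 2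
                   <= l i * (w i + w (S i)) / 2 + Rabs kap * (Rabs (dv i) * V)).
  { intros i Hi. fold (w i) (w (S i)).
    assert (Rabs (du i - kap * dv i) <= l i + Rabs kap * Rabs (dv i)).
    { eapply Rle_trans. apply Rabs_triang. rewrite Rabs_Ropp, Rabs_mult. pose proof (Hdul i). lra. }
    assert (0 <= w i) by apply Rabs_pos. assert (0 <= w (S i)) by apply Rabs_pos.
    pose proof (HwV i ltac:(lia)). pose proof (HwV (S i) ltac:(lia)).
    assert (Rabs (du i - kap * dv i) * (w i + w (S i)) <= (l i + Rabs kap * Rabs (dv i)) * (w i + w (S i))) by (apply Rmult_le_compat_r; lra).
    assert (Rabs kap * Rabs (dv i) * (w i + w (S i)) <= Rabs kap * Rabs (dv i) * (2 * V)).
    { apply Rmult_le_compat_l. apply Rmult_le_pos; apply Rabs_pos. lra. }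
    lra. }
  eapply Rle_trans. apply (ssum_le _ _ n Hterm). rewrite ssum_plus, Hid, ssum_scal.
  replace (ssum (fun i => Rabs (dv i) * V) n) with (V * V) by (rewrite (ssum_ext _ (fun i => V * Rabs (dv i))) by (intros; ring); rewrite ssum_scal; auto).
  assert (ssum (fun i => (w (S i) - w i) * c i) n <= X / lam + lam * (Lam * Lam * Lam) / 24).
  { eapply Rle_trans. apply (ssum_le _ _ n (fun i _ => Hb i)). rewrite ssum_plus.
    unfold Rdiv at 1. rewrite (ssum_ext (fun i => x i * / lam) (fun i => / lam * x i)) by (intros; ring).
    rewrite ssum_scal, HX.
    rewrite (ssum_ext (fun i => lam * (l i * c i * c i) / 2) (fun i => (lam / 2) * (l i * c i * c i))) by (intros; field).
    rewrite ssum_scal.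
    assert (lam / 2 * ssum (fun i => l i * c i * c i) n <= lam / 2 * (Lam * Lam * Lam / 12)) by (apply Rmult_le_compat_l; lra).
    assert (lam / 2 * (Lam * Lam * Lam / 12) = lam * (Lam * Lam * Lam) / 24) by field. unfold Rdiv in *. lra. }
  assert (V * V <= (X / mu + mu * Lam / 2) * (X / mu + mu * Lam / 2)) by (apply Rmult_le_compat; lra).
  assert (Rabs kap * (V * V) <= Rabs kap * ((X / mu + mu * Lam / 2) * (X / mu + mu * Lam / 2))) by (apply Rmult_le_compat_l; [apply Rabs_pos|lra]).
  lra.
Qed.

Definition slope (a b : pt) := (snd b - snd a) / (fst b - fst a).

Lemma segment_off : forall a b x, fst a <> fst b -> segment a b x ->
  off (fst a) (snd a) (slope a b) x = 0.
Proof.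
  intros [a1 a2] [b1 b2] x Hab [t [Ht ->]]. unfold off, slope; cbn [fst snd] in *. field.
  intro. apply Hab. lra.
Qed.

Definition rad (g : R -> pt) (t : nat -> R) (e : nat -> R) i :=
  sqrt (e i * (2 * dist2 (g (t i)) (g (t (S i))) + e i)) / 2.

Lemma rad_sq : forall g t e i, 0 <= e i ->
  rad g t e i * rad g t e i = e i * (2 * dist2 (g (t i)) (g (t (S i))) + e i) / 4.
Proof.
  intros. unfold rad. pose proof (dist2_pos (g (t i)) (g (t (S i)))).
  replace (sqrt (e i * (2 * dist2 (g (t i)) (g (t (S i))) + e i)) / 2 *
    (sqrt (e i * (2 * dist2 (g (t i)) (g (t (S i))) + e i)) / 2)) with
    ((sqrt (e i * (2 * dist2 (g (t i)) (g (t (S i))) + e i)) * sqrt (e i * (2 * dist2 (g (t i)) (g (t (S i))) + e i))) / 4) by field.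
  rewrite sqrt_sqrt. auto. apply Rmult_le_pos; lra.
Qed.

Definition Tset (a b : pt) (P Q : pt) (r : R) (x : pt) : Prop :=
  let a1 := fst a in let a2 := snd a in let k := slope a b in
  let p1 := fst P in let p2 := snd P in let q1 := fst Q in let q2 := snd Q in
  exists t z1 z2, 0 <= t <= 1 /\ z1 * z1 + z2 * z2 <= r * r /\
        fst x = p1 + t * (q1 - p1) + z1 /\
        Rmin 0 (off a1 a2 k (p1 + t * (q1 - p1) + z1, p2 + t * (q2 - p2) + z2)) <= off a1 a2 k x <=
        Rmax 0 (off a1 a2 k (p1 + t * (q1 - p1) + z1, p2 + t * (q2 - p2) + z2)).

Lemma curve_in : forall g t n e y, is_partition t n -> (forall i, 0 <= e i) ->
  (forall i s, (i < n)%nat -> t i <= s <= t (S i) -> excess g t i s <= e i) ->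
  (exists s, 0 <= s <= 1 /\ y = g s) ->
  exists i, (i < n)%nat /\ exists tau z1 z2, 0 <= tau <= 1 /\
     z1 * z1 + z2 * z2 <= rad g t e i * rad g t e i /\
     y = (fst (g (t i)) + tau * (fst (g (t (S i))) - fst (g (t i))) + z1,
          snd (g (t i)) + tau * (snd (g (t (S i))) - snd (g (t i))) + z2).
Proof.
  intros g t n e y Hp He Hex [s [Hs ->]].
  destruct (find_piece t n Hp s Hs) as [i [Hi Hsi]]. exists i. split; auto.
  pose proof (Hex i s Hi Hsi). unfold excess in H.
  destruct (fatten (g (t i)) (g (t (S i))) (g s) (e i) (He i) ltac:(lra)) as [tau [z1 [z2 [Ht [Hz Hy]]]]].
  exists tau, z1, z2. split; auto. split; auto. rewrite rad_sq by auto. auto.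
Qed.

Lemma Omega_in : forall a b (Om : pt -> Prop) g t n e,
  fst a <> fst b -> Defs.open_set Om -> bounded_set Om -> is_partition t n ->
  (forall x, in_boundary Om x -> segment a b x \/ exists s, 0 <= s <= 1 /\ x = g s) ->
  (forall i, 0 <= e i) ->
  (forall i s, (i < n)%nat -> t i <= s <= t (S i) -> excess g t i s <= e i) ->
  forall x, Om x -> exists i, (i < n)%nat /\ Tset a b (g (t i)) (g (t (S i))) (rad g t e i) x.
Proof.
  intros a b Om g t n e Hab Hop Hbd Hp Hbdy He Hex x Hx.
  set (k := slope a b).
  assert (Hoff : forall s ee, off (fst a) (snd a) k (fst x, snd x + ee * s) = off (fst a) (snd a) k x + ee * s).
  { intros. unfold off. cbn [fst snd]. ring. }
  destruct (Rle_dec 0 (off (fst a) (snd a) k x)) as [Hpos|Hneg].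
  - destruct (ray Om x 1 Hop Hbd Hx (or_introl eq_refl)) as [s [Hs [Hb _]]].
    destruct (Hbdy _ Hb) as [Hseg|Hcur].
    + exfalso. pose proof (segment_off a b _ Hab Hseg). fold k in H. rewrite Hoff in H. lra.
    + destruct (curve_in g t n e _ Hp He Hex Hcur) as [i [Hi [tau [z1 [z2 [Ht [Hz Hy]]]]]]].
      exists i. split; auto. exists tau, z1, z2. split; auto. split; auto.
      rewrite <- Hy. split. cbn [fst]. apply (f_equal fst) in Hy. cbn [fst] in Hy. auto.
      fold k. rewrite Hoff. unfold Rmin, Rmax. destruct (Rle_dec 0 (off (fst a) (snd a) k x + 1 * s)); lra.
  - destruct (ray Om x (-1) Hop Hbd Hx (or_intror eq_refl)) as [s [Hs [Hb _]]].
    destruct (Hbdy _ Hb) as [Hseg|Hcur].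
    + exfalso. pose proof (segment_off a b _ Hab Hseg). fold k in H. rewrite Hoff in H. lra.
    + destruct (curve_in g t n e _ Hp He Hex Hcur) as [i [Hi [tau [z1 [z2 [Ht [Hz Hy]]]]]]].
      exists i. split; auto. exists tau, z1, z2. split; auto. split; auto.
      rewrite <- Hy. split. cbn [fst]. apply (f_equal fst) in Hy. cbn [fst] in Hy. auto.
      fold k. rewrite Hoff. unfold Rmin, Rmax. destruct (Rle_dec 0 (off (fst a) (snd a) k x + -1 * s)); lra.
Qed.

Lemma err_bound : forall A B K r M l L,
  0 <= A -> 0 <= B -> 0 <= K -> 0 <= r -> r <= 1 -> 1 <= M -> A <= l -> l <= L ->
  B <= (1 + K) * l ->
  let G := 1 + K in let H := G * L in
  A * H / (2 * M) + 2 * r * M * H + (A + 2 * r * M) * (2 * (B / M + (1 + K) * r) + 2 * K * (A / M + r))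
  <= 14 * G * (L + 1) * (l / M + r * M).
Proof.
  intros A B K r M l L HA HB HK Hr Hr1 HM HAl HlL HBl G H.
  assert (HM0 : 0 < M) by lra. set (iM := / M).
  assert (HiM : 0 < iM) by (apply Rinv_0_lt_compat; lra).
  assert (HiM1 : iM * M = 1) by (unfold iM; field; lra).
  replace (A * H / (2 * M) + 2 * r * M * H + (A + 2 * r * M) * (2 * (B / M + (1 + K) * r) + 2 * K * (A / M + r)))
    with (iM * (A * H / 2 + 2 * A * B + 2 * K * A * A) + 2 * A * r * (1 + 2 * K) + 4 * r * B + 4 * r * K * A
          + 4 * r * r * M * (1 + 2 * K) + 2 * r * M * H) by (unfold iM; field; lra).
  replace (14 * G * (L + 1) * (l / M + r * M)) with (iM * (14 * G * (L + 1) * l) + 14 * G * (L + 1) * (r * M)) by (unfold iM; field; lra).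
  assert (HL0 : 0 <= l) by lra. assert (HG : 1 <= G) by (unfold G; lra).
  assert (E1 : A * H / 2 + 2 * A * B + 2 * K * A * A <= 14 * G * (L + 1) * l).
  { assert (A * H <= l * H) by (apply Rmult_le_compat_r; unfold H; [apply Rmult_le_pos; lra|lra]).
    assert (l * H = G * L * l) by (unfold H; ring).
    assert (A * B <= l * ((1 + K) * l)) by (apply Rmult_le_compat; lra).
    assert (l * l <= L * l) by (apply Rmult_le_compat_r; lra).
    assert (K * A * A <= K * l * l). { assert (A * A <= l * l) by (apply Rmult_le_compat; lra). replace (K * A * A) with (K * (A * A)) by ring. replace (K * l * l) with (K * (l * l)) by ring. apply Rmult_le_compat_l; lra. }
    assert (K * (l * l) <= K * (L * l)) by (apply Rmult_le_compat_l; lra).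
    assert (0 <= G * L * l) by (apply Rmult_le_pos; [apply Rmult_le_pos|]; lra).
    assert (0 <= G * l) by (apply Rmult_le_pos; lra).
    assert (K * (L * l) <= G * L * l). { replace (G * L * l) with (G * (L * l)) by ring. apply Rmult_le_compat_r. apply Rmult_le_pos; lra. unfold G; lra. }
    assert ((1 + K) * l * l <= G * L * l). { unfold G. replace ((1 + K) * l * l) with ((1 + K) * (l * l)) by ring.
      replace ((1 + K) * L * l) with ((1 + K) * (L * l)) by ring. apply Rmult_le_compat_l; lra. }
    unfold G in *. nra. }
  assert (E1' : iM * (A * H / 2 + 2 * A * B + 2 * K * A * A) <= iM * (14 * G * (L + 1) * l)) by (apply Rmult_le_compat_l; lra).
  assert (HrM : r <= r * M). { replace r with (r * 1) at 1 by ring. apply Rmult_le_compat_l; lra. }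
  assert (0 <= r * M) by (apply Rmult_le_pos; lra).
  assert (F1 : 2 * A * r * (1 + 2 * K) <= 4 * G * L * (r * M)).
  { assert (A * r <= L * (r * M)) by (apply Rmult_le_compat; lra).
    assert (0 <= L * (r * M)) by (apply Rmult_le_pos; lra).
    replace (2 * A * r * (1 + 2 * K)) with (2 * (1 + 2 * K) * (A * r)) by ring.
    replace (4 * G * L * (r * M)) with (2 * (2 * G) * (L * (r * M))) by ring.
    apply Rmult_le_compat; try lra. apply Rmult_le_pos; lra. unfold G; lra. }
  assert (F2 : 4 * r * B <= 4 * G * L * (r * M)).
  { assert (B <= G * L). { unfold G. assert ((1 + K) * l <= (1 + K) * L) by (apply Rmult_le_compat_l; lra). lra. }
    assert (r * B <= (r * M) * (G * L)) by (apply Rmult_le_compat; lra). lra. }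
  assert (F3 : 4 * r * K * A <= 4 * G * L * (r * M)).
  { assert (K * A <= G * L) by (apply Rmult_le_compat; unfold G; lra).
    assert (r * (K * A) <= (r * M) * (G * L)) by (apply Rmult_le_compat; try lra; apply Rmult_le_pos; lra). lra. }
  assert (F4 : 4 * r * r * M * (1 + 2 * K) <= 8 * G * (r * M)).
  { assert (r * r <= r) by (replace r with (r * 1) at 3 by ring; apply Rmult_le_compat_l; lra).
    assert (r * r * M <= r * M) by (apply Rmult_le_compat_r; lra).
    assert (r * r * M * (1 + 2 * K) <= r * M * (2 * G)) by (apply Rmult_le_compat; try lra; [apply Rmult_le_pos; [apply sq_nn|lra] | unfold G; lra]).
    lra. }
  assert (F5 : 2 * r * M * H = 2 * G * L * (r * M)) by (unfold H; ring).
  assert (F6 : 14 * G * L * (r * M) + 8 * G * (r * M) <= 14 * G * (L + 1) * (r * M)).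
  { assert (0 <= G * (r * M)) by (apply Rmult_le_pos; lra). nra. }
  assert (0 <= G * L * (r * M)) by (apply Rmult_le_pos; [apply Rmult_le_pos|]; lra).
  lra.
Qed.

Definition eps1_of (e0 K : R) := Rmin (1/2) (Rmin (e0 / 14) (e0 * e0 / (768 * ((K + 1) * (K + 1))))).

Lemma eps1_pos : forall e0 K, 0 < e0 -> 0 <= K -> 0 < eps1_of e0 K.
Proof.
  intros. unfold eps1_of. assert (0 < (K+1)*(K+1)) by (apply Rmult_lt_0_compat; lra).
  assert (0 < e0 * e0 / (768 * ((K + 1) * (K + 1)))) by (apply Rdiv_lt_0_compat; [apply Rmult_lt_0_compat|]; lra).
  unfold Rmin; repeat destruct Rle_dec; lra.
Qed.

Lemma num_final : forall e0 K d L, 0 < e0 -> 0 <= K -> 0 < d -> d <= L ->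
  L - d <= 2 * eps1_of e0 K * d ->
  sqrt ((L - d) * (L * L * L) / 6) + 2 * K * ((L - d) * L)
    <= (1 + e0) / sqrt 6 * Rpower d (3 / 2) * sqrt (d + L - 2 * d).
Proof.
  intros e0 K d L He0 HK Hd HdL Heps.
  set (ep := eps1_of e0 K) in *.
  assert (Hep1 : ep <= 1/2) by (unfold ep, eps1_of, Rmin; repeat destruct Rle_dec; lra).
  assert (Hep2 : ep <= e0 / 14) by (unfold ep, eps1_of, Rmin; repeat destruct Rle_dec; lra).
  assert (Hep3 : ep <= e0 * e0 / (768 * ((K + 1) * (K + 1)))) by (unfold ep, eps1_of, Rmin; repeat destruct Rle_dec; lra).
  assert (Hep0 : 0 < ep) by (apply eps1_pos; auto).
  set (del := L - d). replace (d + L - 2 * d) with del by (unfold del; ring).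
  assert (Hdel : 0 <= del) by (unfold del; lra).
  assert (HR : Rpower d (3 / 2) = d * sqrt d).
  { replace (3 / 2) with (1 + / 2) by field. rewrite Rpower_plus, Rpower_1, Rpower_sqrt by lra. auto. }
  rewrite HR.
  assert (H6 : 0 < sqrt 6) by (apply sqrt_lt_R0; lra).
  assert (Hsd := sqrt_sqrt d ltac:(lra)). assert (Hsdel := sqrt_sqrt del Hdel). assert (Hs6 := sqrt_sqrt 6 ltac:(lra)).
  assert (Hsd0 := sqrt_pos d). assert (Hsdel0 := sqrt_pos del).
  set (Q := d * sqrt d * sqrt del / sqrt 6).
  assert (HQ0 : 0 <= Q) by (unfold Q; apply div_nn; [apply Rmult_le_pos; [apply Rmult_le_pos|]|]; lra).
  assert (HQ2 : Q * Q = d * d * d * del / 6).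
  { unfold Q. field_simplify. 2: lra. rewrite !pow2_sqrt by lra. unfold pow. field. }
  replace ((1 + e0) / sqrt 6 * (d * sqrt d) * sqrt del) with ((1 + e0 / 2) * Q + (e0 / 2) * Q) by (unfold Q; field; lra).
  assert (HL : L <= d * (1 + 2 * ep)) by (unfold del in *; lra).
  apply Rplus_le_compat.
  - apply sq_le_le. apply Rmult_le_pos; lra.
    rewrite sqrt_sqrt. 2: { apply div_nn. apply Rmult_le_pos; auto. apply Rmult_le_pos; [apply Rmult_le_pos|]; lra. lra. }
    replace ((1 + e0 / 2) * Q * ((1 + e0 / 2) * Q)) with ((1 + e0 / 2) * (1 + e0 / 2) * (Q * Q)) by ring.
    rewrite HQ2.
    set (x := 2 * ep) in *. assert (0 <= x <= 1) by (unfold x; lra). assert (7 * x <= e0) by (unfold x; lra).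
    assert (HL3 : L * L * L <= (d * (1 + x)) * (d * (1 + x)) * (d * (1 + x))).
    { assert (0 <= L) by lra. assert (L * L <= (d * (1 + x)) * (d * (1 + x))) by (apply Rmult_le_compat; lra).
      apply Rmult_le_compat; try lra. apply sq_nn. }
    assert (Hx3 : (1 + x) * (1 + x) * (1 + x) <= (1 + e0 / 2) * (1 + e0 / 2)).
    { assert (x * x <= x) by (replace x with (x * 1) at 3 by ring; apply Rmult_le_compat_l; lra).
      assert (x * x * x <= x) by (assert (x * x * x <= x * x * 1) by (apply Rmult_le_compat_l; [apply sq_nn|lra]); lra).
      pose proof (sq_nn e0). lra. }
    assert (del * (L * L * L) <= del * (d * d * d) * ((1 + x) * (1 + x) * (1 + x))).
    { replace (del * (d * d * d) * ((1 + x) * (1 + x) * (1 + x))) with (del * ((d * (1 + x)) * (d * (1 + x)) * (d * (1 + x)))) by ring.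
      apply Rmult_le_compat_l; lra. }
    assert (del * (d * d * d) * ((1 + x) * (1 + x) * (1 + x)) <= del * (d * d * d) * ((1 + e0 / 2) * (1 + e0 / 2))).
    { apply Rmult_le_compat_l; auto. apply Rmult_le_pos; auto. apply Rmult_le_pos; [apply sq_nn|lra]. }
    lra.
  - apply sq_le_le. apply Rmult_le_pos; lra.
    replace (e0 / 2 * Q * (e0 / 2 * Q)) with (e0 * e0 / 4 * (Q * Q)) by field. rewrite HQ2.
    assert (d * ep <= d * (1/2)) by (apply Rmult_le_compat_l; lra). assert (HL2 : L <= 2 * d) by lra.
    assert (Hdel2 : del <= 2 * ep * d) by (unfold del; lra).
    assert (HK2 : K * K * ep <= e0 * e0 / 768).
    { assert (K * K <= (K + 1) * (K + 1)) by nra.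
      assert (0 < (K+1)*(K+1)) by (apply Rmult_lt_0_compat; lra).
      assert (ep * (768 * ((K + 1) * (K + 1))) <= e0 * e0).
      { apply (Rmult_le_compat_r (768 * ((K + 1) * (K + 1)))) in Hep3. 2: lra.
        unfold Rdiv in Hep3. rewrite Rmult_assoc, Rinv_l in Hep3 by lra. lra. }
      assert (K * K * ep <= (K + 1) * (K + 1) * ep) by (apply Rmult_le_compat_r; lra). lra. }
    (* LHS^2 = 4 K^2 del^2 L^2 <= 16 K^2 del^2 d^2 <= 32 K^2 ep d^3 del *)
    replace (2 * K * (del * L) * (2 * K * (del * L))) with (4 * (K * K) * (del * del) * (L * L)) by ring.
    assert (L * L <= (2 * d) * (2 * d)) by (apply Rmult_le_compat; lra).
    assert (0 <= K * K) by apply sq_nn. assert (0 <= del * del) by apply sq_nn.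
    assert (4 * (K * K) * (del * del) * (L * L) <= 16 * (K * K) * (del * del) * (d * d)).
    { replace (16 * (K * K) * (del * del) * (d * d)) with (4 * (K * K) * (del * del) * (4 * (d * d))) by ring.
      apply Rmult_le_compat_l. apply Rmult_le_pos; [apply Rmult_le_pos|]; lra. lra. }
    assert (del * del <= del * (2 * ep * d)) by (apply Rmult_le_compat_l; lra).
    assert (16 * (K * K) * (del * del) * (d * d) <= 32 * (K * K * ep) * (d * d * d * del)).
    { replace (32 * (K * K * ep) * (d * d * d * del)) with (16 * (K * K) * (del * (2 * ep * d)) * (d * d)) by ring.
      apply Rmult_le_compat_r. apply sq_nn. apply Rmult_le_compat_l. apply Rmult_le_pos; lra. lra. }
    assert (0 <= d * d * d * del) by (apply Rmult_le_pos; [apply Rmult_le_pos; [apply sq_nn|]|]; lra).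
    assert (32 * (K * K * ep) * (d * d * d * del) <= 32 * (e0 * e0 / 768) * (d * d * d * del)).
    { apply Rmult_le_compat_r; auto. lra. }
    assert (32 * (e0 * e0 / 768) * (d * d * d * del) <= e0 * e0 / 4 * (d * d * d * del / 6)).
    { right. field. }
    lra.
Qed.

Lemma main_bound : forall (u v : nat -> R) n kap d L eta,
  v O = 0 -> v n = 0 -> 0 < d -> d <= L -> 0 < eta ->
  ssum (fun i => sqrt ((u (S i) - u i) ^ 2 + (v (S i) - v i) ^ 2)) n <= L ->
  d <= ssum (fun i => Rabs (u (S i) - u i)) n ->
  ssum (fun i => Rabs ((u (S i) - u i) - kap * (v (S i) - v i)) * (Rabs (v i) + Rabs (v (S i))) / 2) n
    <= sqrt ((L - d) * (L * L * L) / 6) + 2 * Rabs kap * ((L - d) * L) + eta / 2.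
Proof.
  intros u v n kap d L eta Hv0 Hvn Hd HdL He HLam Hdu.
  set (Lam := ssum (fun i => sqrt ((u (S i) - u i) ^ 2 + (v (S i) - v i) ^ 2)) n) in *.
  set (X := Lam - ssum (fun i => Rabs (u (S i) - u i)) n).
  assert (HX0 : 0 <= X).
  { unfold X, Lam. rewrite <- ssum_minus. apply ssum_nonneg. intros i _.
    assert (Rabs (u (S i) - u i) <= sqrt ((u (S i) - u i) ^ 2 + (v (S i) - v i) ^ 2)).
    { rewrite <- sqrt_Rsqr_abs. apply sqrt_le_1_alt. unfold Rsqr. pose proof (pow2_ge_0 (v (S i) - v i)). simpl. lra. }
    lra. }
  assert (HXd : X <= L - d) by (unfold X; lra).
  assert (HLam0 : 0 <= Lam) by (unfold Lam; apply ssum_nonneg; intros; apply sqrt_pos).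
  assert (HL0 : 0 < L) by lra.
  assert (HK := Rabs_pos kap).
  assert (Hcube : Lam * Lam * Lam <= L * L * L).
  { assert (Lam * Lam <= L * L) by (apply Rmult_le_compat; lra). apply Rmult_le_compat; try lra. apply sq_nn. }
  assert (HL3 : 0 < L * L * L) by (apply Rmult_lt_0_compat; [apply Rmult_lt_0_compat|]; lra).
  destruct (Rle_lt_dec (L - d) 0) as [Hz|Hp].
  -
    assert (HX : X = 0) by lra. replace (L - d) with 0 by lra.
    replace ((0 * (L * L * L)) / 6) with 0 by field. rewrite sqrt_0.
    set (lam := 6 * eta / (L * L * L + 1)).
    set (mu' := Rmin 1 (eta / (4 * (Rabs kap + 1)))).
    assert (Hmu'0 : 0 < mu'). { unfold mu', Rmin. destruct Rle_dec. lra. apply Rdiv_lt_0_compat; lra. }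
    assert (Hmu'1 : mu' <= 1) by (unfold mu', Rmin; destruct Rle_dec; lra).
    assert (Hmu'2 : mu' <= eta / (4 * (Rabs kap + 1))) by (unfold mu', Rmin; destruct Rle_dec; lra).
    set (mu := mu' / (L + 1)).
    assert (Hlam : 0 < lam) by (unfold lam; apply Rdiv_lt_0_compat; lra).
    assert (Hmu : 0 < mu) by (unfold mu; apply Rdiv_lt_0_compat; lra).
    pose proof (discrete_main u v n lam mu kap Hv0 Hvn Hlam Hmu) as Hdm. cbv beta zeta in Hdm. fold Lam in Hdm. fold X in Hdm.
    rewrite HX in Hdm.
    eapply Rle_trans. apply Hdm.
    assert (E1 : lam * (Lam * Lam * Lam) / 24 <= eta / 4).
    { assert (lam * (Lam * Lam * Lam) <= lam * (L * L * L)) by (apply Rmult_le_compat_l; lra).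
      assert (lam * (L * L * L) <= 6 * eta).
      { unfold lam. unfold Rdiv. replace (6 * eta * / (L * L * L + 1) * (L * L * L)) with (6 * eta * ((L * L * L) / (L * L * L + 1))) by (field; lra).
        assert (L * L * L / (L * L * L + 1) <= 1). { apply (Rmult_le_reg_r (L * L * L + 1)). lra. unfold Rdiv. rewrite Rmult_assoc, Rinv_l by lra. lra. }
        assert (0 <= L * L * L / (L * L * L + 1)) by (apply div_nn; lra).
        assert (6 * eta * (L * L * L / (L * L * L + 1)) <= 6 * eta * 1) by (apply Rmult_le_compat_l; lra). lra. }
      lra. }
    assert (E2 : 0 <= mu * Lam / 2 <= mu').
    { split. apply div_nn. apply Rmult_le_pos; lra. lra.
      unfold mu. replace (mu' / (L + 1) * Lam / 2) with (mu' * (Lam / (2 * (L + 1)))) by (field; lra).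
      assert (Lam / (2 * (L + 1)) <= 1). { apply (Rmult_le_reg_r (2 * (L + 1))). lra. unfold Rdiv. rewrite Rmult_assoc, Rinv_l by lra. lra. }
      assert (0 <= Lam / (2 * (L + 1))) by (apply div_nn; lra).
      assert (mu' * (Lam / (2 * (L + 1))) <= mu' * 1) by (apply Rmult_le_compat_l; lra). lra. }
    replace (0 / lam) with 0 by (field; lra). replace (0 / mu) with 0 by (field; lra).
    assert ((0 + mu * Lam / 2) * (0 + mu * Lam / 2) <= mu') .
    { assert ((0 + mu * Lam / 2) * (0 + mu * Lam / 2) <= mu' * mu') by (apply Rmult_le_compat; lra).
      assert (mu' * mu' <= mu' * 1) by (apply Rmult_le_compat_l; lra). lra. }
    assert (Rabs kap * ((0 + mu * Lam / 2) * (0 + mu * Lam / 2)) <= Rabs kap * mu') by (apply Rmult_le_compat_l; lra).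
    assert (Rabs kap * mu' <= eta / 4).
    { assert (Rabs kap * mu' <= (Rabs kap + 1) * (eta / (4 * (Rabs kap + 1)))) by (apply Rmult_le_compat; lra).
      replace ((Rabs kap + 1) * (eta / (4 * (Rabs kap + 1)))) with (eta / 4) in H1 by (field; lra). auto. }
    lra.
  - set (del := L - d) in *.
    assert (Hs := sqrt_lt_R0 (del * (L * L * L) / 6) ltac:(apply Rdiv_lt_0_compat; [apply Rmult_lt_0_compat|]; lra)).
    set (sg := sqrt (del * (L * L * L) / 6)) in *.
    assert (Hsg2 : sg * sg = del * (L * L * L) / 6) by (unfold sg; apply sqrt_sqrt; apply div_nn; [apply Rmult_le_pos|]; lra).
    assert (Ht := sqrt_lt_R0 (2 * del * L) ltac:(apply Rmult_lt_0_compat; [apply Rmult_lt_0_compat|]; lra)).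
    set (tau := sqrt (2 * del * L)) in *.
    assert (Ht2 : tau * tau = 2 * del * L) by (unfold tau; apply sqrt_sqrt; apply Rmult_le_pos; [apply Rmult_le_pos|]; lra).
    set (lam := 12 * sg / (L * L * L)). set (mu := tau / L).
    assert (Hlam : 0 < lam) by (unfold lam; apply Rdiv_lt_0_compat; lra).
    assert (Hmu : 0 < mu) by (unfold mu; apply Rdiv_lt_0_compat; lra).
    pose proof (discrete_main u v n lam mu kap Hv0 Hvn Hlam Hmu) as Hdm. cbv beta zeta in Hdm. fold Lam in Hdm. fold X in Hdm.
    eapply Rle_trans. apply Hdm.
    assert (E1 : X / lam + lam * (Lam * Lam * Lam) / 24 <= sg).
    { assert (X / lam <= del / lam) by (unfold Rdiv; apply Rmult_le_compat_r; [left; apply Rinv_0_lt_compat|]; lra).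
      assert (del / lam = sg / 2). { unfold lam. replace (del / (12 * sg / (L * L * L))) with (del * (L * L * L) / (12 * sg)) by (field; lra).
        replace (del * (L * L * L)) with (6 * (sg * sg)) by lra. field; lra. }
      assert (lam * (Lam * Lam * Lam) <= lam * (L * L * L)) by (apply Rmult_le_compat_l; lra).
      assert (lam * (L * L * L) = 12 * sg) by (unfold lam; field; lra). lra. }
    assert (E2 : 0 <= X / mu + mu * Lam / 2 <= tau).
    { assert (0 <= X / mu) by (apply div_nn; lra). assert (0 <= mu * Lam / 2) by (apply div_nn; [apply Rmult_le_pos|]; lra).
      split. lra.
      assert (X / mu <= del / mu) by (unfold Rdiv; apply Rmult_le_compat_r; [left; apply Rinv_0_lt_compat|]; lra).
      assert (del / mu = tau / 2). { unfold mu. replace (del / (tau / L)) with (del * L / tau) by (field; lra).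
        replace (del * L) with (tau * tau / 2) by lra. field; lra. }
      assert (mu * Lam / 2 <= mu * L / 2) by (apply Rmult_le_compat_r; [lra|]; apply Rmult_le_compat_l; lra).
      assert (mu * L / 2 = tau / 2) by (unfold mu; field; lra). lra. }
    assert ((X / mu + mu * Lam / 2) * (X / mu + mu * Lam / 2) <= tau * tau) by (apply Rmult_le_compat; lra).
    assert (Rabs kap * ((X / mu + mu * Lam / 2) * (X / mu + mu * Lam / 2)) <= Rabs kap * (tau * tau)) by (apply Rmult_le_compat_l; lra).
    rewrite Ht2 in H0. lra.
Qed.

Definition Uc (a b p : pt) d := ((fst p - fst a) * (fst b - fst a) + (snd p - snd a) * (snd b - snd a)) / d.
Definition Vc (a b p : pt) d := ((snd p - snd a) * (fst b - fst a) - (fst p - fst a) * (snd b - snd a)) / d.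

Lemma conv_main : forall (a b p q : pt) d, fst b - fst a <> 0 -> 0 < d ->
  d * d = (fst b - fst a) ^ 2 + (snd b - snd a) ^ 2 ->
  let k := (snd b - snd a) / (fst b - fst a) in
  Rabs (fst q - fst p) * (Rabs (snd p - snd a - k * (fst p - fst a)) + Rabs (snd q - snd a - k * (fst q - fst a))) / 2
  = Rabs ((Uc a b q d - Uc a b p d) - k * (Vc a b q d - Vc a b p d)) * (Rabs (Vc a b p d) + Rabs (Vc a b q d)) / 2.
Proof.
  intros [a1 a2] [b1 b2] [p1 p2] [q1 q2] d HD Hd Hdd k. unfold Uc, Vc, k in *; cbn [fst snd] in *.
  set (D1 := b1 - a1) in *. set (D2 := b2 - a2) in *.
  assert (E1 : (q2 - a2) * D1 - (q1 - a1) * D2 - ((p2 - a2) * D1 - (p1 - a1) * D2) = (q2 - p2) * D1 - (q1 - p1) * D2) by ring.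
  assert (Hdu : ((q1 - a1) * D1 + (q2 - a2) * D2) / d - ((p1 - a1) * D1 + (p2 - a2) * D2) / d -
     D2 / D1 * (((q2 - a2) * D1 - (q1 - a1) * D2) / d - ((p2 - a2) * D1 - (p1 - a1) * D2) / d)
     = (q1 - p1) * (d / D1)).
  { apply (Rmult_eq_reg_r (D1 * d)). 2: { intro. apply Rmult_integral in H. lra. }
    replace ((q1 - p1) * (d / D1) * (D1 * d)) with ((q1 - p1) * (d * d)) by (field; lra).
    rewrite Hdd. field. lra. }
  rewrite Hdu.
  assert (Ho : forall x1 x2, x2 - a2 - D2 / D1 * (x1 - a1) = ((x2 - a2) * D1 - (x1 - a1) * D2) / d * (d / D1)).
  { intros. field. lra. }
  rewrite !Ho. rewrite !Rabs_mult. field.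
Qed.

Lemma conv_len : forall (a b p q : pt) d, 0 < d ->
  d * d = (fst b - fst a) ^ 2 + (snd b - snd a) ^ 2 ->
  sqrt ((Uc a b q d - Uc a b p d) ^ 2 + (Vc a b q d - Vc a b p d) ^ 2) = dist2 p q.
Proof.
  intros [a1 a2] [b1 b2] [p1 p2] [q1 q2] d Hd Hdd. unfold Uc, Vc, dist2 in *; cbn [fst snd] in *. f_equal.
  apply (Rmult_eq_reg_r (d * d)). 2: { intro. apply Rmult_integral in H. lra. }
  replace (((((q1 - a1) * (b1 - a1) + (q2 - a2) * (b2 - a2)) / d - ((p1 - a1) * (b1 - a1) + (p2 - a2) * (b2 - a2)) / d) ^ 2 +
   (((q2 - a2) * (b1 - a1) - (q1 - a1) * (b2 - a2)) / d - ((p2 - a2) * (b1 - a1) - (p1 - a1) * (b2 - a2)) / d) ^ 2) * (d * d))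
   with (((p1 - q1) ^ 2 + (p2 - q2) ^ 2) * ((b1 - a1) ^ 2 + (b2 - a2) ^ 2)) by (field; lra).
  rewrite Hdd. ring.
Qed.

Lemma geom_main : forall a b (Om : pt -> Prop) g L, fst a <> fst b -> Defs.open_set Om -> bounded_set Om ->
  g 0 = b -> g 1 = a -> curve_length g L ->
  (forall x, in_boundary Om x -> segment a b x \/ exists s, 0 <= s <= 1 /\ x = g s) ->
  area_le Om (sqrt ((L - dist2 a b) * (L * L * L) / 6) + 2 * Rabs (slope a b) * ((L - dist2 a b) * L)).
Proof.
  intros a b Om g L Hab Hop Hbd Hg0 Hg1 HL Hbdy.
  apply cover_area. intros eta He.
  set (d := dist2 a b). set (k := slope a b). set (K := Rabs k). set (G := 1 + K).
  assert (HK : 0 <= K) by apply Rabs_pos.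
  assert (Hd : 0 < d). { pose proof (dist2_fst a b). assert (fst a - fst b <> 0) by lra. pose proof (Rabs_pos_lt _ H0). unfold d; lra. }
  assert (HdL : d <= L). { pose proof (three_point g L 0 HL ltac:(lra)). rewrite dist2_refl, Hg0, Hg1, dist2_sym in H. unfold d; lra. }
  assert (Hdd : d * d = (fst b - fst a) ^ 2 + (snd b - snd a) ^ 2).
  { unfold d. rewrite dist2_sq. ring. }
  set (C := 14 * G * (L + 1)).
  assert (HC : 0 < C) by (unfold C, G; apply Rmult_lt_0_compat; lra).
  destruct (archimed_cor1 (eta / (4 * C * (L + 1)))) as [m [Hm1 Hm0]].
  { apply Rdiv_lt_0_compat. lra. apply Rmult_lt_0_compat; lra. }
  set (M := INR m) in *.
  assert (HM1 : 1 <= M). { unfold M. replace 1 with (INR 1) by reflexivity. apply le_INR. lia. }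
  set (nu := Rmin (1 / (2 * L + 2)) (eta / (4 * C * M * (2 * L + 2)))).
  assert (Hnu0 : 0 < nu). { unfold nu, Rmin. destruct Rle_dec. apply Rdiv_lt_0_compat; lra.
    apply Rdiv_lt_0_compat. lra. apply Rmult_lt_0_compat; [apply Rmult_lt_0_compat|]; lra. }
  assert (Hnu1 : nu <= 1 / (2 * L + 2)) by (unfold nu, Rmin; destruct Rle_dec; lra).
  assert (Hnu2 : nu <= eta / (4 * C * M * (2 * L + 2))) by (unfold nu, Rmin; destruct Rle_dec; lra).
  assert (Hnu3 : nu <= 1 / 2). { assert (1 / (2 * L + 2) <= 1 / 2). { apply Rmult_le_compat_l. lra. apply Rinv_le_contravar; lra. } lra. }
  assert (Heta0 : 0 < nu * nu) by (apply Rmult_lt_0_compat; lra).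
  destruct (poly_near_L g L (nu * nu) HL Heta0) as [t [n [Hp Hnear]]].
  destruct (excess_sup g L t n (nu * nu) HL Hp Heta0 Hnear) as [e [He0 [Hes Hex]]].
  set (P := fun i => g (t i)).
  set (l := fun i => dist2 (P i) (P (S i))).
  set (r := fun i => rad g t e i).
  assert (HLam : ssum l n <= L) by (apply (poly_le_L g L t n HL Hp)).
  assert (Hl0 : forall i, 0 <= l i) by (intros; apply dist2_pos).
  assert (HlL : forall i, (i < n)%nat -> l i <= L).
  { intros. pose proof (ssum_term l n i (fun j _ => Hl0 j) H). lra. }
  assert (HeI : forall i, (i < n)%nat -> e i <= nu * nu).
  { intros. pose proof (ssum_term e n i (fun j _ => He0 j) H). lra. }
  assert (Hr0 : forall i, 0 <= r i) by (intros; unfold r, rad; apply div_nn; [apply sqrt_pos|lra]).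
  assert (Hr2 : forall i, r i * r i = e i * (2 * l i + e i) / 4) by (intros; unfold r; apply rad_sq; auto).
  assert (Hnunu : nu * nu <= nu) by (replace nu with (nu * 1) at 3 by ring; apply Rmult_le_compat_l; lra).
  assert (Hr1 : forall i, (i < n)%nat -> r i <= 1).
  { intros i Hi. apply sq_le_le. lra. rewrite Hr2. pose proof (HeI i Hi). pose proof (HlL i Hi). pose proof (He0 i).
    assert (e i * (2 * l i + e i) <= nu * (2 * L + 2)).
    { apply Rmult_le_compat; try lra. pose proof (Hl0 i). lra. }
    assert (nu * (2 * L + 2) <= 1).
    { apply (Rmult_le_compat_r (2 * L + 2)) in Hnu1. 2: lra. replace (1 / (2 * L + 2) * (2 * L + 2)) with 1 in Hnu1 by (field; lra). lra. }
    lra. }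
  assert (Hrs : forall i, r i <= e i / (2 * nu) + nu * (2 * l i + e i) / 8).
  { intros i. pose proof (amgm (2 * r i) (e i) ((2 * l i + e i) / 2) nu (He0 i) ltac:(pose proof (Hl0 i); pose proof (He0 i); lra) Hnu0).
    assert (2 * r i * (2 * r i) <= 2 * ((2 * l i + e i) / 2) * e i) by (replace (2 * r i * (2 * r i)) with (4 * (r i * r i)) by ring; rewrite Hr2; lra).
    specialize (H H0). replace (e i / (2 * nu)) with (e i / nu / 2) by (field; lra). lra. }
  assert (Hrsum : ssum r n <= nu * (2 * L + 2)).
  { eapply Rle_trans. apply (ssum_le r (fun i => / (2 * nu) * e i + (nu / 4) * l i + (nu / 8) * e i) n).
    intros i _. pose proof (Hrs i). replace (e i / (2 * nu)) with (/ (2 * nu) * e i) in H by (unfold Rdiv; ring). lra.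
    rewrite !ssum_plus, !ssum_scal.
    assert (/ (2 * nu) * ssum e n <= / (2 * nu) * (nu * nu)) by (apply Rmult_le_compat_l; [left; apply Rinv_0_lt_compat|]; lra).
    replace (/ (2 * nu) * (nu * nu)) with (nu / 2) in H by (field; lra).
    assert (nu / 4 * ssum l n <= nu / 4 * L) by (apply Rmult_le_compat_l; lra).
    assert (nu / 8 * ssum e n <= nu / 8 * (nu * nu)) by (apply Rmult_le_compat_l; lra).
    assert (nu / 8 * (nu * nu) <= nu / 8) . { replace (nu / 8) with (nu / 8 * 1) at 2 by ring. apply Rmult_le_compat_l. lra.
      assert (nu * nu <= 1 / 2 * 1) by (apply Rmult_le_compat; lra). lra. }
    assert (0 <= nu * L) by (apply Rmult_le_pos; lra). lra. }
  assert (HPr : forall i, (i <= n)%nat -> 0 <= t i <= 1) by (apply part_range; auto).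
  assert (HPa : forall i, (i <= n)%nat -> dist2 (P i) a <= L).
  { intros. pose proof (three_point g L (t i) HL (HPr i H)). rewrite Hg1 in H0. pose proof (dist2_pos (g 0) (g (t i))). unfold P; lra. }
  assert (Hoff : forall i, (i <= n)%nat -> Rabs (snd (P i) - snd a - k * (fst (P i) - fst a)) <= G * L).
  { intros. pose proof (HPa i H). pose proof (dist2_fst (P i) a). pose proof (dist2_snd (P i) a).
    eapply Rle_trans. apply Rabs_triang. rewrite Rabs_Ropp, Rabs_mult. fold K.
    assert (K * Rabs (fst (P i) - fst a) <= K * L) by (apply Rmult_le_compat_l; lra). unfold G. lra. }
  set (Dv := fun i => (snd (P (S i)) - snd (P i)) - k * (fst (P (S i)) - fst (P i))).
  set (main := fun i => Rabs (fst (P (S i)) - fst (P i)) *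
      (Rabs (snd (P i) - snd a - k * (fst (P i) - fst a)) + Rabs (snd (P (S i)) - snd a - k * (fst (P (S i)) - fst a))) / 2).
  destruct (covers_family (fun i => Tset a b (P i) (P (S i)) (r i)) (fun i => main i + C * (l i / M + r i * M)) n) as [lst [Hcov Hsum]].
  { intros i Hi.
    destruct (edge_cover (fst a) (snd a) k (fst (P i)) (snd (P i)) (fst (P (S i))) (snd (P (S i))) (r i) m (G * L) (Hr0 i) Hm0
               (Hoff i ltac:(lia)) (Hoff (S i) ltac:(lia))) as [li [Hli Hls]].
    exists li. split. exact Hli.
    eapply Rle_trans. apply Hls. cbv zeta. fold M. unfold main.
    pose proof (err_bound (Rabs (fst (P (S i)) - fst (P i))) (Rabs (Dv i)) K (r i) M (l i) L (Rabs_pos _) (Rabs_pos _) HK (Hr0 i) (Hr1 i Hi) HM1) as HE.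
    assert (HA : Rabs (fst (P (S i)) - fst (P i)) <= l i). { unfold l. rewrite dist2_sym. apply dist2_fst. }
    assert (HB : Rabs (Dv i) <= (1 + K) * l i).
    { unfold Dv. eapply Rle_trans. apply Rabs_triang. rewrite Rabs_Ropp, Rabs_mult. fold K.
      assert (Rabs (snd (P (S i)) - snd (P i)) <= l i) by (unfold l; rewrite dist2_sym; apply dist2_snd).
      assert (K * Rabs (fst (P (S i)) - fst (P i)) <= K * l i) by (apply Rmult_le_compat_l; lra). lra. }
    specialize (HE HA (HlL i Hi) HB). cbv zeta in HE. fold G in HE. fold C in HE. unfold Dv in HE. fold K. fold G. lra. }
  exists lst. split.
  - eapply covers_mono. exact Hcov. intros x Hx.
    exact (Omega_in a b Om g t n e Hab Hop Hbd Hp Hbdy He0 Hex x Hx).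
  - eapply Rle_trans. exact Hsum. rewrite ssum_plus.
    assert (Herr : ssum (fun i => C * (l i / M + r i * M)) n <= eta / 2).
    { rewrite ssum_scal, ssum_plus.
      rewrite (ssum_ext (fun i => l i / M) (fun i => / M * l i)) by (intros; unfold Rdiv; ring).
      rewrite (ssum_ext (fun i => r i * M) (fun i => M * r i)) by (intros; ring).
      rewrite !ssum_scal.
      assert (/ M * ssum l n <= / M * L) by (apply Rmult_le_compat_l; [left; apply Rinv_0_lt_compat|]; lra).
      assert (M * ssum r n <= M * (nu * (2 * L + 2))) by (apply Rmult_le_compat_l; lra).
      assert (C * (/ M * L) <= eta / 4).
      { assert (/ M * L <= (eta / (4 * C * (L + 1))) * (L + 1)).
        { apply Rmult_le_compat; try lra. left; apply Rinv_0_lt_compat; lra. }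
        replace (eta / (4 * C * (L + 1)) * (L + 1)) with (eta / (4 * C)) in H1 by (field; lra).
        apply (Rmult_le_compat_l C) in H1. 2: lra. replace (C * (eta / (4 * C))) with (eta / 4) in H1 by (field; lra). lra. }
      assert (C * (M * (nu * (2 * L + 2))) <= eta / 4).
      { apply (Rmult_le_compat_r (4 * C * M * (2 * L + 2))) in Hnu2. 2: { apply Rmult_le_pos; [apply Rmult_le_pos|]; lra. }
        replace (eta / (4 * C * M * (2 * L + 2)) * (4 * C * M * (2 * L + 2))) with eta in Hnu2 by (field; repeat split; lra).
        lra. }
      assert (C * (/ M * ssum l n) <= C * (/ M * L)) by (apply Rmult_le_compat_l; lra).
      assert (C * (M * ssum r n) <= C * (M * (nu * (2 * L + 2)))) by (apply Rmult_le_compat_l; lra).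
      lra. }
    set (u := fun i => Uc a b (P i) d). set (v := fun i => Vc a b (P i) d).
    assert (HD1 : fst b - fst a <> 0) by (intro; apply Hab; lra).
    assert (Hmain : ssum main n = ssum (fun i => Rabs ((u (S i) - u i) - k * (v (S i) - v i)) * (Rabs (v i) + Rabs (v (S i))) / 2) n).
    { apply ssum_ext. intros i _. unfold main, u, v. apply (conv_main a b (P i) (P (S i)) d HD1 Hd Hdd). }
    assert (Hlen : ssum (fun i => sqrt ((u (S i) - u i) ^ 2 + (v (S i) - v i) ^ 2)) n = ssum l n).
    { apply ssum_ext. intros i _. unfold u, v, l. apply conv_len; auto. }
    destruct Hp as [Hn [Ht0 [Htn Hmono]]].
    assert (HP0 : P O = b) by (unfold P; rewrite Ht0; auto).
    assert (HPn : P n = a) by (unfold P; rewrite Htn; auto).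
    assert (Hv0 : v O = 0) by (unfold v, Vc; rewrite HP0; field; lra).
    assert (Hvn : v n = 0) by (unfold v, Vc; rewrite HPn; field; lra).
    assert (Hu : d <= ssum (fun i => Rabs (u (S i) - u i)) n).
    { eapply Rle_trans. 2: apply ssum_abs. rewrite (ssum_tele u n).
      unfold u, Uc. rewrite HP0, HPn. replace ((fst a - fst a) * (fst b - fst a) + (snd a - snd a) * (snd b - snd a)) with 0 by ring.
      replace ((fst b - fst a) * (fst b - fst a) + (snd b - snd a) * (snd b - snd a)) with (d * d) by (rewrite Hdd; ring).
      replace (0 / d - d * d / d) with (- d) by (field; lra). rewrite Rabs_Ropp, Rabs_right; lra. }
    pose proof (main_bound u v n k d L eta Hv0 Hvn Hd HdL He ltac:(rewrite Hlen; auto) Hu).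
    rewrite <- Hmain in H. fold K in H. lra.
Qed.

Lemma area_le_mono : forall S M M', area_le S M -> M <= M' -> area_le S M'.
Proof.
  intros S M M' H HM eta He. destruct (H eta He) as [rs [l0 [H1 [H2 [H3 H4]]]]].
  exists rs, l0. repeat split; auto. lra.
Qed.

Lemma core : forall a b : pt, fst a <> fst b ->
  forall eps0 : R, 0 < eps0 ->
  exists eps1 : R, 0 < eps1 /\
    forall (Om : pt -> Prop) (g : R -> pt) (L : R),
      Defs.open_set Om -> bounded_set Om -> g 0 = b -> g 1 = a -> curve_length g L ->
      (forall x, in_boundary Om x -> segment a b x \/ exists t, 0 <= t <= 1 /\ x = g t) ->
      dist2 a b + L <= (1 + eps1) * (2 * dist2 a b) ->
      area_le Om
        ((1 + eps0) / sqrt 6 * Rpower (dist2 a b) (3 / 2)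
           * sqrt (dist2 a b + L - 2 * dist2 a b)).
Proof.
  intros a b Hab eps0 He0. exists (eps1_of eps0 (Rabs (slope a b))). split.
  apply eps1_pos; auto; apply Rabs_pos.
  intros Om g L Hop Hbd Hg0 Hg1 HL Hbdy Hper.
  eapply area_le_mono. apply (geom_main a b Om g L Hab Hop Hbd Hg0 Hg1 HL Hbdy).
  assert (Hd : 0 < dist2 a b). { pose proof (dist2_fst a b). assert (fst a - fst b <> 0) by lra. pose proof (Rabs_pos_lt _ H0). lra. }
  assert (HdL : dist2 a b <= L). { pose proof (three_point g L 0 HL ltac:(lra)). rewrite dist2_refl, Hg0, Hg1, dist2_sym in H. lra. }
  apply num_final; auto. apply Rabs_pos. lra.
Qed.

Definition sw (p : pt) : pt := (snd p, fst p).

Lemma sw_sw : forall p, sw (sw p) = p.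
Proof. intros [x y]; reflexivity. Qed.

Lemma dist2_sw : forall p q, dist2 (sw p) (sw q) = dist2 p q.
Proof. intros [p1 p2] [q1 q2]. unfold dist2, sw; cbn [fst snd]. f_equal. ring. Qed.

Lemma lub_ext : forall (E E' : R -> Prop) m, (forall x, E x <-> E' x) -> is_lub E m -> is_lub E' m.
Proof.
  intros E E' m H [H1 H2]. split.
  - intros x Hx. apply H1. apply H. auto.
  - intros b0 Hb. apply H2. intros x Hx. apply Hb. apply H. auto.
Qed.

Theorem lemma2 :
  forall a b : pt, a <> b ->
  forall eps0 : R, 0 < eps0 ->
  exists eps1 : R, 0 < eps1 /\
    forall (Omega : pt -> Prop) (g : R -> pt) (L : R),
      domain Omega -> bounded_set Omega -> simply_connected Omega ->
      continuous_path g -> g 0 = b -> g 1 = a ->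
      (forall s t, 0 <= s <= 1 -> 0 <= t <= 1 -> g s = g t -> s = t) ->
      (forall t, 0 < t < 1 -> ~ segment a b (g t)) ->
      curve_length g L ->
      (forall x, in_boundary Omega x <->
                 (segment a b x \/ exists t, 0 <= t <= 1 /\ x = g t)) ->
      dist2 a b + L <= (1 + eps1) * (2 * dist2 a b) ->
      area_le Omega
        ((1 + eps0) / sqrt 6 * Rpower (dist2 a b) (3 / 2)
           * sqrt (dist2 a b + L - 2 * dist2 a b)).
Proof.
  intros a b Hab eps0 He0.
  destruct (Req_dec (fst a) (fst b)) as [Heq|Hne].
  - assert (Hne' : fst (sw a) <> fst (sw b)).
    { unfold sw; cbn [fst]. intro. apply Hab. destruct a, b; cbn in *; subst; auto. }
    destruct (core (sw a) (sw b) Hne' eps0 He0) as [eps1 [Hep Hcore]].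
    exists eps1. split; auto.
    intros Om g L [_ [Hop _]] Hbd _ _ Hg0 Hg1 _ _ HL Hbdy Hper.
    rewrite dist2_sw in Hcore.
    assert (HA := Hcore (fun x => Om (sw x)) (fun s => sw (g s)) L).
    assert (Hop' : Defs.open_set (fun x => Om (sw x))).
    { intros x Hx. destruct (Hop _ Hx) as [r [Hr Hb]]. exists r. split; auto. intros y Hy. apply Hb. rewrite dist2_sw. auto. }
    assert (Hbd' : bounded_set (fun x => Om (sw x))).
    { destruct Hbd as [M HM]. exists M. intros x Hx. pose proof (HM _ Hx). rewrite <- (dist2_sw x (0,0)). auto. }
    assert (HL' : curve_length (fun s => sw (g s)) L).
    { eapply lub_ext. 2: exact HL. intros x. split; intros [t [n [Hp ->]]]; exists t, n; split; auto;
      unfold poly_length; rewrite !sum_f_ssum; apply ssum_ext; intros; cbv beta; rewrite dist2_sw; auto. }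
    assert (Hbdy' : forall x, in_boundary (fun x => Om (sw x)) x -> segment (sw a) (sw b) x \/ exists t, 0 <= t <= 1 /\ x = sw (g t)).
    { intros x Hx. assert (in_boundary Om (sw x)).
      { intros r Hr. destruct (Hx r Hr) as [[y1 [Hy1 Hy1']] [y2 [Hy2 Hy2']]]. split.
        exists (sw y1). split; auto. rewrite dist2_sw; auto.
        exists (sw y2). split; auto. rewrite dist2_sw; auto. }
      destruct (proj1 (Hbdy _) H) as [[t [Ht Hs]]|[t [Ht Hs]]].
      - left. exists t. split; auto. rewrite <- (sw_sw x), Hs. destruct a, b; reflexivity.
      - right. exists t. split; auto. rewrite <- (sw_sw x), Hs. reflexivity. }
    specialize (HA Hop' Hbd' ltac:(cbv beta; rewrite Hg0; auto) ltac:(cbv beta; rewrite Hg1; auto) HL' Hbdy' Hper).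
    intros eta He. destruct (HA eta He) as [rs [l0 [H1 [H2 [H3 H4]]]]].
    exists (fun k => let '(x1, x2, y1, y2) := rs k in (y1, y2, x1, x2)), l0. split; [|split; [|split]].
    + intros k. specialize (H1 k). destruct (rs k) as [[[x1 x2] y1] y2]. tauto.
    + intros p Hp. destruct (H2 (sw p) ltac:(rewrite sw_sw; auto)) as [k Hk]. exists k.
      destruct (rs k) as [[[x1 x2] y1] y2]. destruct p. cbn in *. tauto.
    + replace (fun k => rect_area (let '(x1, x2, y1, y2) := rs k in (y1, y2, x1, x2))) with (fun k => rect_area (rs k)). exact H3.
      apply functional_extensionality. intros k. destruct (rs k) as [[[x1 x2] y1] y2]. cbn. ring.
    + auto.
  - destruct (core a b Hne eps0 He0) as [eps1 [Hep Hcore]]. exists eps1. split; auto.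
    intros Om g L [_ [Hop _]] Hbd _ _ Hg0 Hg1 _ _ HL Hbdy Hper.
    apply (Hcore Om g L Hop Hbd Hg0 Hg1 HL); auto. intros x Hx. apply Hbdy; auto.
Qed.
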